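(* $$ \begin{aligned} &\mathcal C_2\left(\tfrac16\right)=3^{\frac1{12}}\exp\left(\frac{\sqrt3}{4\pi}\left(\frac14L(2,\chi_3)-L(2,\chi_6)\right)\right), \\ &\mathcal C_3\left(\tfrac16\right)=3^{\frac1{72}}\exp\left(\frac{11}{72\pi^2}\zeta(3)+\frac{\sqrt3}{12\pi}\left(\frac14L(2,\chi_3)-L(2,\chi_6)\right)\right). \end{aligned} $$ Consequently $\zeta(3)=\frac{72\pi^2}{11}\log\left(\frac{3^{1/72}\,\mathcal C_3(1/6)}{\mathcal C_2(1/6)^{1/3}}\right)$.
   Context: For an integer $r\ge2$ let $P_r(y)=(1-y)\exp\left(y+\frac{y^2}{2}+\cdots+\frac{y^r}{r}\right)$. For real $|x|<\tfrac12$, the Kurokawa–Koyama multiple cosine function of order $r$ is the convergent positive product $\mathcal C_r(x)=\prod_{n\ge1,\ n\text{ odd}}\left\{P_r\left(\frac{x}{n/2}\right)P_r\left(-\frac{x}{n/2}\right)^{(-1)^{r-1}}\right\}^{(n/2)^{r-1}}$. $\chi_3$ is the nontrivial Dirichlet character modulo 3 ($\chi_3(n)=1$ if $n\equiv1$, $-1$ if $n\equiv2$, $0$ if $3\mid n$) and $\chi_6$ is the nontrivial real primitive character modulo 6 ($\chi_6(n)=1$ if $n\equiv1\pmod 6$, $-1$ if $n\equiv5\pmod6$, $0$ otherwise); $L(s,\chi)=\sum_{n\ge1}\chi(n)n^{-s}$. *)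

(* Defs.v *)
From Stdlib Require Import Reals Lra Lia.
From Coquelicot Require Import Coquelicot.
Open Scope R_scope.

Definition Pr (r : nat) (y : R) : R :=
  (1 - y) * exp (sum_f_R0 (fun k => y ^ (k + 1) / INR (k + 1)) (r - 1)).

Definition mc_factor (r : nat) (x : R) (k : nat) : R :=
  let h := INR (2 * k + 1) / 2 in
  Rpower (Pr r (x / h) * Rpower (Pr r (- x / h)) ((-1) ^ (r - 1))) (h ^ (r - 1)).

Fixpoint mc_partial (r : nat) (x : R) (N : nat) : R :=
  match N with
  | O => 1
  | S N' => mc_partial r x N' * mc_factor r x N'
  end.

Definition mcos (r : nat) (x : R) : R := real (Lim_seq (mc_partial r x)).

Definition chi3 (n : nat) : R :=
  match (n mod 3)%nat with 1%nat => 1 | 2%nat => -1 | _ => 0 end.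
Definition chi6 (n : nat) : R :=
  match (n mod 6)%nat with 1%nat => 1 | 5%nat => -1 | _ => 0 end.

Definition Lfun (chi : nat -> R) (s : nat) : R :=
  Series (fun n => chi (S n) / INR (S n) ^ s).

Definition zeta3 : R := Series (fun n => 1 / INR (S n) ^ 3).

(* Main.v *)
Require Import Defs.
From Stdlib Require Import Reals Lra Lia Arith Ranalysis5.
From Coquelicot Require Import Coquelicot.
Open Scope R_scope.

Lemma exs_le (a b : nat -> R): (forall n, Rabs (a n) <= b n) -> ex_series b -> ex_series a.
Proof.
  intros H Hb. apply (ex_series_le a b); auto.
Qed.

Lemma exs_abs_le (a b : nat -> R): (forall n, Rabs (a n) <= b n) -> ex_series b ->
  ex_series (fun n => Rabs (a n)).
Proof.
  intros H Hb. apply (exs_le _ b); auto. intros n; rewrite Rabs_Rabsolu; auto.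
Qed.

Lemma ex_series_inv_sq : ex_series (fun n => / (INR n + 1) ^ 2).
Proof.
  apply (exs_le _ (fun n => 2 * (/ (INR n + 1) - / (INR n + 2)))).
  - intros n. pose proof (pos_INR n).
    rewrite Rabs_pos_eq; [| apply Rlt_le, Rinv_0_lt_compat; apply pow_lt; lra].
    assert (E: 2 * (/ (INR n + 1) - / (INR n + 2)) = 2 / ((INR n + 1)*(INR n+2))) by (field; lra).
    rewrite E. simpl. rewrite Rmult_1_r. unfold Rdiv.
    rewrite Rinv_mult. rewrite Rinv_mult.
    assert (0 < / (INR n + 1)) by (apply Rinv_0_lt_compat; lra).
    assert (/ (INR n + 1) <= 2 * / (INR n + 2)).
    { apply (Rmult_le_reg_l ((INR n +1)*(INR n + 2))). nra.
      field_simplify; lra. }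
    nra.
  - assert (HT: ex_series (fun n => / (INR n + 1) - / (INR n + 2))).
    2:{ apply (ex_series_ext (fun n => (/ (INR n + 1) - / (INR n + 2)) * 2)).
        intros n; apply Rmult_comm. apply ex_series_scal_r; auto. }
    exists 1.
    apply is_series_Reals. intros eps Heps.
    destruct (archimed (/ eps)) as [Ha _].
    destruct (INR_unbounded (/eps)) as [N HN].
    exists N. intros n Hn. unfold Rdist.
    assert (Hs: forall m, sum_f_R0 (fun n => / (INR n + 1) - / (INR n + 2)) m = 1 - / (INR m + 2)).
    { induction m. simpl sum_f_R0. change (INR 0) with 0. field. rewrite tech5, IHm, S_INR. field.
      split; pose proof (pos_INR m); lra. }
    rewrite Hs. pose proof (pos_INR n).
    assert (INR N <= INR n) by (apply le_INR; lia).
    replace (1 - / (INR n + 2) - 1) with (- / (INR n + 2)) by ring.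
    rewrite Rabs_Ropp, Rabs_pos_eq by (apply Rlt_le, Rinv_0_lt_compat; lra).
    assert (0 < / eps) by (apply Rinv_0_lt_compat; lra).
    rewrite <- (Rinv_inv eps).
    apply Rinv_lt_contravar; nra.
Qed.

Lemma series_tail_bound (a b : nat -> R) (n : nat):
  (forall k, Rabs (a k) <= b k) -> ex_series b ->
  Rabs (Series a - sum_f_R0 a n) <= Series b - sum_f_R0 b n.
Proof.
  intros H Hb.
  assert (Ha : ex_series a) by (apply (exs_le _ b); auto).
  rewrite (Series_incr_n a (S n)) by (auto; lia).
  rewrite (Series_incr_n b (S n)) by (auto; lia). simpl Init.Nat.pred.
  replace (sum_f_R0 a n + Series (fun k => a (S n + k)%nat) - sum_f_R0 a n)
    with (Series (fun k => a (S n + k)%nat)) by ring.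
  replace (sum_f_R0 b n + Series (fun k => b (S n + k)%nat) - sum_f_R0 b n)
    with (Series (fun k => b (S n + k)%nat)) by ring.
  assert (Hbt : ex_series (fun k => b (S n + k)%nat)) by (apply ex_series_incr_n; auto).
  eapply Rle_trans. apply Series_Rabs.
  apply (exs_abs_le _ _ (fun k => H (S n + k)%nat) Hbt).
  apply Series_le; auto. intros k; split; [apply Rabs_pos | apply H].
Qed.

Lemma series_partial_cv (a : nat -> R) : ex_series a -> Un_cv (sum_f_R0 a) (Series a).
Proof.
  intros Ha. pose proof (Series_correct _ Ha) as H. apply is_series_Reals in H.
  intros eps He; destruct (H eps He) as [N HN]; exists N; exact HN.
Qed.

Lemma series_CVU (f : nat -> R -> R) (M : nat -> R) c (rho : posreal):
  (forall n y, Boule c rho y -> Rabs (f n y) <= M n) -> ex_series M ->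
  CVU (fun N y => sum_f_R0 (fun n => f n y) N) (fun y => Series (fun n => f n y)) c rho.
Proof.
  intros HM Hs eps Heps.
  destruct (series_partial_cv M Hs eps Heps) as [N HN].
  exists N. intros n y Hn Hy.
  eapply Rle_lt_trans. apply (series_tail_bound _ M); auto.
  specialize (HN n Hn). unfold Rdist in HN.
  rewrite Rabs_minus_sym in HN. eapply Rle_lt_trans; [apply Rle_abs|]. exact HN.
Qed.

Lemma series_deriv (f f' : nat -> R -> R) (c : R) (rho : posreal) (M : nat -> R) x :
 Boule c rho x ->
 (forall n y, Boule c rho y -> derivable_pt_lim (f n) y (f' n y)) ->
 (forall n y, Boule c rho y -> continuity_pt (f' n) y) ->
 (forall n y, Boule c rho y -> Rabs (f' n y) <= M n) ->
 ex_series M ->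
 (forall y, Boule c rho y -> ex_series (fun n => f n y)) ->
 derivable_pt_lim (fun y => Series (fun n => f n y)) x (Series (fun n => f' n x)).
Proof.
  intros Hx Hd Hc HM Hs He.
  apply (derivable_pt_lim_CVU (fun N y => sum_f_R0 (fun n => f n y) N)
          (fun N y => sum_f_R0 (fun n => f' n y) N) _
          (fun y => Series (fun n => f' n y)) x c rho Hx).
  - intros y N Hy. induction N.
    + simpl. apply Hd; auto.
    + simpl. apply (derivable_pt_lim_plus (fun y => sum_f_R0 (fun n => f n y) N) (f (S N))); auto.
  - intros y Hy. apply series_partial_cv; auto.
  - apply (series_CVU _ M); auto.
  - apply (CVU_continuity (fun N y => sum_f_R0 (fun n => f' n y) N)).
    + apply (series_CVU _ M); auto.
    + intros N y Hy. induction N.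
      * simpl. apply Hc; auto.
      * simpl. apply (continuity_pt_plus (fun y => sum_f_R0 (fun n => f' n y) N) (f' (S N))); auto.
Qed.

Lemma series_cont (f : nat -> R -> R) (c : R) (rho : posreal) (M : nat -> R) x :
 Boule c rho x ->
 (forall n y, Boule c rho y -> continuity_pt (f n) y) ->
 (forall n y, Boule c rho y -> Rabs (f n y) <= M n) ->
 ex_series M ->
 continuity_pt (fun y => Series (fun n => f n y)) x.
Proof.
  intros Hx Hc HM Hs.
  apply (CVU_continuity (fun N y => sum_f_R0 (fun n => f n y) N) _ c rho); auto.
  - apply (series_CVU _ M); auto.
  - intros N y Hy. induction N.
    + simpl. apply Hc; auto.
    + simpl. apply (continuity_pt_plus (fun y => sum_f_R0 (fun n => f n y) N) (f (S N))); auto.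
Qed.

Lemma mvt_bound (f f' : R -> R) (a b K : R) :
  a <= b ->
  (forall c, a <= c <= b -> derivable_pt_lim f c (f' c)) ->
  (forall c, a <= c <= b -> Rabs (f' c) <= K) ->
  Rabs (f b - f a) <= K * (b - a).
Proof.
  intros Hab Hd HK.
  destruct (MVT_abs f f' a b) as [c [Hc Hc']].
  - intros c Hc. rewrite Rmin_left, Rmax_right in Hc; auto.
  - rewrite Rmin_left, Rmax_right in Hc'; auto. rewrite Hc.
    rewrite (Rabs_pos_eq (b - a)) by lra.
    apply Rmult_le_compat_r; [lra|]. apply HK; auto.
Qed.

Lemma Series_zero : Series (fun _ => 0) = 0.
Proof.
  rewrite (Series_ext _ (fun n => 0 * 0)) by (intros; ring).
  rewrite Series_scal_l. ring.
Qed.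

Lemma subseq_series (a Q : nat -> R) (phi : nat -> nat) :
  (forall N, sum_f_R0 Q N = sum_f_R0 a (phi N)) -> (forall N, (N <= phi N)%nat) ->
  ex_series a -> ex_series Q /\ Series Q = Series a.
Proof.
  intros HQ Hphi Ha.
  assert (H : is_series Q (Series a)).
  { apply is_series_Reals. intros eps He.
    destruct (series_partial_cv a Ha eps He) as [N HN].
    exists N. intros n Hn. rewrite HQ. apply HN. specialize (Hphi n). lia. }
  split. exists (Series a); auto. apply is_series_unique; auto.
Qed.

Lemma Series_pair (a : nat -> R) : ex_series a ->
  ex_series (fun n => a (2*n)%nat + a (2*n+1)%nat) /\
  Series (fun n => a (2*n)%nat + a (2*n+1)%nat) = Series a.
Proof.
  apply (subseq_series a _ (fun N => 2*N+1)%nat); [|intros; lia].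
  induction N.
  - simpl. ring.
  - rewrite tech5, IHN.
    replace (2 * S N + 1)%nat with (S (S (2*N+1))) by lia.
    rewrite tech5, tech5. replace (2 * S N)%nat with (S (2*N+1)) by lia. ring.
Qed.

Lemma Series_triple (a : nat -> R) : ex_series a ->
  ex_series (fun n => a (3*n)%nat + a (3*n+1)%nat + a (3*n+2)%nat) /\
  Series (fun n => a (3*n)%nat + a (3*n+1)%nat + a (3*n+2)%nat) = Series a.
Proof.
  apply (subseq_series a _ (fun N => 3*N+2)%nat); [|intros; lia].
  induction N.
  - simpl. ring.
  - rewrite tech5, IHN.
    replace (3 * S N + 2)%nat with (S (S (S (3*N+2)))) by lia.
    rewrite tech5, tech5, tech5.
    replace (3 * S N + 1)%nat with (S (S (3*N+2))) by lia.
    replace (3 * S N)%nat with (S (3*N+2)) by lia. ring.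
Qed.

Lemma ex_series_Cinvsq C : ex_series (fun n => C * / (INR n + 1)^2).
Proof.
  apply (ex_series_ext (fun n => / (INR n + 1)^2 * C)). intros n; apply Rmult_comm.
  apply ex_series_scal_r, ex_series_inv_sq.
Qed.

Lemma exs_invsq (a : nat -> R) C : (forall n, Rabs (a n) <= C * / (INR n + 1)^2) -> ex_series a.
Proof.
  intros H. apply (exs_le _ _ H), ex_series_Cinvsq.
Qed.

Lemma cont_of_deriv f x l : derivable_pt_lim f x l -> continuity_pt f x.
Proof.
  intros H. apply (derivable_continuous_pt f x). exists l. exact H.
Qed.

Lemma cont_ex (f : R -> R) x : ex_derive f x -> continuity_pt f x.
Proof.
  intros H. apply continuity_pt_filterlim. apply (@ex_derive_continuous R_AbsRing R_NormedModule). auto.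
Qed.

Lemma sin_lower (u : R) : 0 <= u <= PI -> u - u^3/6 <= sin u.
Proof.
  intros Hu. destruct (SIN u) as [H _]; try lra.
  assert (E : sin_lb u = u - u^3/6 + u^5/120 - u^7/5040).
  { unfold sin_lb, sin_approx, sin_term. simpl. field. }
  rewrite E in H. pose proof PI_4.
  assert (0 <= u^5/120 - u^7/5040).
  { assert (u^7 = u^5 * u^2) by ring. assert (0 <= u^5) by (apply pow_le; lra).
    assert (u^2 <= 16) by nra. nra. }
  lra.
Qed.

Lemma sin_upper (u : R) : 0 <= u -> sin u <= u.
Proof.
  intros Hu. destruct (Rle_lt_or_eq_dec 0 u Hu) as [H|H].
  - left. apply sin_lt_x; auto.
  - subst. rewrite sin_0. lra.
Qed.

Lemma inv_sin_sq_bound (u : R) : 0 < u <= PI/2 -> 0 <= / (sin u)^2 - / u^2 <= 3.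
Proof.
  intros Hu. pose proof PI_4 as HP4. pose proof PI_RGT_0 as HP0.
  pose proof (sin_lower u ltac:(lra)) as Hl. pose proof (sin_upper u ltac:(lra)) as Hup.
  set (s := sin u) in *.
  assert (Hu2 : u <= 2) by lra.
  assert (Hs : u * (1 - u*u/6) <= s) by (simpl in Hl; lra).
  assert (Ht : 1/3 <= 1 - u*u/6) by nra.
  assert (Hs0 : 0 < s) by nra.
  assert (E : / s^2 - / u^2 = (u*u - s*s) / (u*u * (s*s))) by (field; lra).
  rewrite E.
  assert (0 < u*u * (s*s)) by (apply Rmult_lt_0_compat; nra).
  split.
  - apply Rmult_le_pos. nra. apply Rlt_le, Rinv_0_lt_compat. auto.
  - apply (Rmult_le_reg_r (u*u * (s*s))). auto.
    unfold Rdiv. rewrite Rmult_assoc, Rinv_l by lra. rewrite Rmult_1_r.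
    set (t := 1 - u*u/6) in *.
    assert (0 <= u*t) by nra.
    assert (H1: (u*t)*(u*t) <= s*s) by nra.
    assert (H2: u*u - (u*t)*(u*t) = u*u*((1-t)*(1+t))) by ring.
    assert (H3: (1 - t) = u*u/6) by (unfold t; ring).
    assert (H4: u*u*(s*s) >= u*u*((u*t)*(u*t))) by nra.
    assert (H5: (1 + t) <= 2) by (unfold t; nra).
    assert (H6: u*u*((1-t)*(1+t)) <= u*u*(u*u/6)*2).
    { rewrite H3. assert (0 <= u*u*(u*u/6)) by nra. nra. }
    assert (H7: u*u*((u*t)*(u*t)) >= u*u*(u*u)/9).
    { assert (t*t >= 1/9) by nra. assert (0 <= u*u*(u*u)) by nra. nra. }
    nra.
Qed.


Definition bsq (x : R) (n : nat) : R := / (x + INR n)^2 + / (x - INR n - 1)^2.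
Definition gsq (x : R) : R := Series (bsq x).

Definition S2 : R := Series (fun n => / (INR n + 1) ^ 2).

Lemma bsq_S_bound x n : 0 < x < 1 -> 0 <= bsq x (S n) <= 2 * / (INR n + 1)^2.
Proof.
  intros Hx. unfold bsq. rewrite S_INR. pose proof (pos_INR n).
  assert (/ (x + (INR n + 1))^2 <= / (INR n + 1)^2).
  { apply Rinv_le_contravar. nra. apply pow_incr; lra. }
  assert (/ (x - (INR n + 1) - 1)^2 <= / (INR n + 1)^2).
  { apply Rinv_le_contravar. nra.
    replace ((x - (INR n + 1) - 1)^2) with ((INR n + 2 - x)^2) by ring. apply pow_incr; lra. }
  assert (0 < / (x + (INR n + 1))^2) by (apply Rinv_0_lt_compat; nra).
  assert (0 < / (x - (INR n + 1) - 1)^2) by (apply Rinv_0_lt_compat; nra).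
  lra.
Qed.

Lemma bsq_ex x : 0 < x < 1 -> ex_series (bsq x).
Proof.
  intros Hx. apply ex_series_incr_1.
  apply (exs_le _ (fun n => 2 * / (INR n + 1)^2)).
  - intros n. destruct (bsq_S_bound x n Hx). rewrite Rabs_pos_eq; lra.
  - apply (ex_series_ext (fun n => / (INR n + 1)^2 * 2)). intros n; apply Rmult_comm.
    apply ex_series_scal_r, ex_series_inv_sq.
Qed.

Lemma gsq_split x : 0 < x < 1 ->
  gsq x = / x^2 + / (x - 1)^2 + Series (fun n => bsq x (S n)).
Proof.
  intros Hx. unfold gsq. rewrite Series_incr_1 by (apply bsq_ex; auto).
  unfold bsq at 1. simpl INR. f_equal. f_equal; f_equal; ring.
Qed.

Lemma gsq_tail_bound x : 0 < x < 1 -> 0 <= Series (fun n => bsq x (S n)) <= 2 * S2.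
Proof.
  intros Hx. split.
  - assert (E: 0 = Series (fun _ => 0)) by (rewrite Series_zero; auto). rewrite E.
    apply Series_le. intros n. split. lra. apply bsq_S_bound; auto.
    apply (proj1 (ex_series_incr_1 (bsq x))), bsq_ex; auto.
  - unfold S2. rewrite <- Series_scal_l. apply Series_le.
    intros n; apply bsq_S_bound; auto.
    apply (ex_series_ext (fun n => / (INR n + 1)^2 * 2)). intros n; apply Rmult_comm.
    apply ex_series_scal_r, ex_series_inv_sq.
Qed.

Definition hsq (x : R) : R := PI^2 / (sin (PI*x))^2 - gsq x.

Lemma S2_nonneg : 0 <= S2.
Proof.
  unfold S2. rewrite <- Series_zero. apply Series_le.
  intros n; split; [lra|]. apply Rlt_le, Rinv_0_lt_compat, pow_lt. pose proof (pos_INR n); lra.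
  apply ex_series_inv_sq.
Qed.

Lemma hsq_half_bound x : 0 < x <= 1/2 ->
  0 <= PI^2 / (sin (PI*x))^2 - / x^2 <= 3 * PI^2.
Proof.
  intros Hx. pose proof PI_RGT_0.
  assert (Hu: 0 < PI*x <= PI/2) by (split; nra).
  destruct (inv_sin_sq_bound (PI*x) Hu) as [H1 H2].
  assert (E: PI^2 / (sin (PI*x))^2 - / x^2 = PI^2 * (/ (sin (PI*x))^2 - / (PI*x)^2)).
  { assert (0 < sin (PI*x)) by (apply sin_gt_0; nra).
    field. repeat split; lra. }
  assert (0 < PI^2) by nra.
  rewrite E. split; nra.
Qed.

Lemma hsq_bound : forall x, 0 < x < 1 -> Rabs (hsq x) <= 3 * PI^2 + 4 + 2 * S2.
Proof.
  intros x Hx. unfold hsq. rewrite gsq_split by auto.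
  pose proof (gsq_tail_bound x Hx). pose proof S2_nonneg. pose proof PI_RGT_0.
  assert (0 <= 3*PI^2) by nra.
  destruct (Rle_or_lt x (1/2)) as [Hh|Hh].
  - pose proof (hsq_half_bound x ltac:(lra)).
    assert (0 < / (x-1)^2 <= 4).
    { split. apply Rinv_0_lt_compat. nra.
      replace 4 with (/ (1/4)) by field. apply Rinv_le_contravar. lra. nra. }
    apply Rabs_le. lra.
  - pose proof (hsq_half_bound (1 - x) ltac:(lra)).
    replace (sin (PI * (1-x))) with (sin (PI * x)) in H3.
    2:{ replace (PI*(1-x)) with (PI - PI*x) by ring. rewrite sin_PI_x. auto. }
    assert (0 < / x^2 <= 4).
    { split. apply Rinv_0_lt_compat. nra.
      replace 4 with (/ (1/4)) by field. apply Rinv_le_contravar. lra. nra. }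
    replace ((x-1)^2) with ((1-x)^2) by ring.
    apply Rabs_le. lra.
Qed.

Lemma trig_dup x : 0 < x < 1 ->
  PI^2 / (sin (PI*(x/2)))^2 + PI^2 / (sin (PI*((x+1)/2)))^2 = 4 * (PI^2 / (sin (PI*x))^2).
Proof.
  intros Hx. pose proof PI_RGT_0.
  replace (PI*((x+1)/2)) with (PI*(x/2) + PI/2) by field.
  rewrite sin_plus, cos_PI2, sin_PI2.
  replace (PI*x) with (2*(PI*(x/2))) by field.
  rewrite sin_2a.
  assert (0 < sin (PI*(x/2))) by (apply sin_gt_0; nra).
  assert (0 < cos (PI*(x/2))) by (apply cos_gt_0; nra).
  pose proof (sin2_cos2 (PI*(x/2))). unfold Rsqr in H2.
  field_simplify; try (split; lra).
  set (s := sin (PI * (x / 2))) in *. set (c := cos (PI * (x / 2))) in *.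
  transitivity (PI^2 * (s*s + c*c) / (s^2*c^2)). f_equal; ring.
  rewrite H2. field. lra.
Qed.

Lemma gsq_dup x : 0 < x < 1 -> gsq (x/2) + gsq ((x+1)/2) = 4 * gsq x.
Proof.
  intros Hx. unfold gsq.
  rewrite <- Series_plus by (apply bsq_ex; lra).
  destruct (Series_pair (bsq x) (bsq_ex x Hx)) as [_ HP].
  rewrite <- HP, <- Series_scal_l. apply Series_ext. intros n.
  unfold bsq. rewrite !plus_INR, !mult_INR. simpl INR.
  pose proof (pos_INR n).
  field. repeat split; lra.
Qed.

Lemma hsq_dup x : 0 < x < 1 -> hsq (x/2) + hsq ((x+1)/2) = 4 * hsq x.
Proof.
  intros Hx. unfold hsq.
  pose proof (trig_dup x Hx). pose proof (gsq_dup x Hx). lra.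
Qed.

Lemma hsq_zero x : 0 < x < 1 -> hsq x = 0.
Proof.
  set (B := 3 * PI^2 + 4 + 2 * S2).
  assert (H : forall n x, 0 < x < 1 -> Rabs (hsq x) <= B / 2^n).
  { induction n.
    - intros y Hy. simpl. rewrite Rdiv_1_r. apply hsq_bound; auto.
    - intros y Hy. pose proof (hsq_dup y Hy).
      pose proof (IHn (y/2) ltac:(lra)). pose proof (IHn ((y+1)/2) ltac:(lra)).
      assert (4 * Rabs (hsq y) <= 2 * (B / 2^n)).
      { rewrite <- (Rabs_pos_eq 4) by lra. rewrite <- Rabs_mult, <- H.
        eapply Rle_trans. apply Rabs_triang. lra. }
      replace (B / 2 ^ S n) with ((B / 2^n) / 2) by (simpl; field; apply pow_nonzero; lra).
      lra. }
  intros Hx. destruct (Req_dec (hsq x) 0) as [E|E]; auto. exfalso.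
  assert (Hp : 0 < Rabs (hsq x)) by (apply Rabs_pos_lt; auto).
  assert (HB : 0 <= B) by (unfold B; pose proof S2_nonneg; pose proof PI_RGT_0; nra).
  destruct (INR_unbounded (B / Rabs (hsq x))) as [n Hn].
  assert (Hpow : INR n <= 2^n).
  { clear. induction n. simpl. lra. rewrite S_INR. simpl.
    assert (1 <= 2^n) by (apply pow_R1_Rle; lra). lra. }
  specialize (H n x Hx).
  assert (0 < 2^n) by (apply pow_lt; lra).
  assert (B / Rabs (hsq x) < 2^n) by lra.
  apply (Rmult_lt_compat_r (Rabs (hsq x))) in H1; auto.
  unfold Rdiv in H1. rewrite Rmult_assoc, Rinv_l in H1 by lra.
  assert (Rabs (hsq x) * 2^n <= B).
  { apply (Rmult_le_compat_r (2^n)) in H; [|lra].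
    unfold Rdiv in H. rewrite Rmult_assoc, Rinv_l in H by lra. lra. }
  lra.
Qed.

Definition hk (n : nat) : R := INR n + / 2.

Lemma sec_series y : -1/2 < y < 1/2 ->
  Series (fun n => / (hk n + y)^2 + / (hk n - y)^2) = PI^2 / (cos (PI*y))^2.
Proof.
  intros Hy. pose proof (hsq_zero (y + /2) ltac:(lra)) as H.
  unfold hsq in H.
  replace (PI * (y + /2)) with (PI*y + PI/2) in H by field.
  rewrite sin_plus, cos_PI2, sin_PI2 in H.
  replace (sin (PI * y) * 0 + cos (PI * y) * 1) with (cos (PI*y)) in H by ring.
  unfold gsq in H. unfold hk.
  rewrite (Series_ext _ (bsq (y + /2))). lra.
  intros n. unfold bsq.
  assert (E: (y + /2 - INR n - 1)^2 = (INR n + /2 - y)^2) by field. rewrite E.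
  assert (E2: (INR n + /2 + y)^2 = (y + /2 + INR n)^2) by ring. rewrite E2. reflexivity.
Qed.

Definition quarter : posreal := mkposreal (1/4) ltac:(lra).

Definition tfun (n : nat) (y : R) : R := / (hk n - y) - / (hk n + y).
Definition dtfun (n : nat) (y : R) : R := / (hk n - y)^2 + / (hk n + y)^2.

Lemma hk_bound n y : Rabs y < 1/4 -> (INR n + 1)/4 <= hk n - y /\ (INR n + 1)/4 <= hk n + y.
Proof.
  intros Hy. unfold hk. pose proof (pos_INR n). apply Rabs_def2 in Hy. split; lra.
Qed.

Lemma tfun_deriv n y : Rabs y < 1/4 -> derivable_pt_lim (tfun n) y (dtfun n y).
Proof.
  intros Hy. destruct (hk_bound n y Hy). pose proof (pos_INR n).
  apply is_derive_Reals. unfold tfun, dtfun. auto_derive.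
  - repeat split; intro; nra.
  - field. repeat split; intro; nra.
Qed.

Lemma dtfun_cont n y : Rabs y < 1/4 -> continuity_pt (dtfun n) y.
Proof.
  intros Hy. destruct (hk_bound n y Hy). pose proof (pos_INR n).
  apply (cont_of_deriv _ _ (2 / (hk n - y)^3 - 2 / (hk n + y)^3)).
  apply is_derive_Reals. unfold dtfun. auto_derive.
  - repeat split; intro; nra.
  - field. repeat split; intro; nra.
Qed.

Lemma inv_sq_le a b : 0 < a -> a <= b -> / b^2 <= / a^2.
Proof. intros. apply Rinv_le_contravar. apply pow_lt; lra. apply pow_incr; lra. Qed.

Lemma dtfun_bound n y : Rabs y < 1/4 -> Rabs (dtfun n y) <= 32 * / (INR n + 1)^2.
Proof.
  intros Hy. destruct (hk_bound n y Hy). pose proof (pos_INR n).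
  unfold dtfun.
  assert (0 < (INR n + 1)/4) by lra.
  pose proof (inv_sq_le _ _ H2 H). pose proof (inv_sq_le _ _ H2 H0).
  assert (E: / ((INR n + 1)/4)^2 = 16 * / (INR n + 1)^2) by (field; lra).
  assert (0 < / (hk n - y)^2) by (apply Rinv_0_lt_compat, pow_lt; lra).
  assert (0 < / (hk n + y)^2) by (apply Rinv_0_lt_compat, pow_lt; lra).
  rewrite Rabs_pos_eq by lra. lra.
Qed.

Lemma tfun_bound n y : Rabs y < 1/4 -> Rabs (tfun n y) <= 8 * / (INR n + 1)^2.
Proof.
  intros Hy. destruct (hk_bound n y Hy). pose proof (pos_INR n).
  unfold tfun.
  assert (E: / (hk n - y) - / (hk n + y) = 2 * y * / ((hk n - y) * (hk n + y))) by (field; lra).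
  rewrite E. rewrite !Rabs_mult.
  rewrite (Rabs_pos_eq (/ _)) by (apply Rlt_le, Rinv_0_lt_compat; nra).
  assert (/ ((hk n - y) * (hk n + y)) <= 16 * / (INR n + 1)^2).
  { replace (16 * / (INR n + 1)^2) with (/ (((INR n + 1)/4) * ((INR n + 1)/4))) by (field; lra).
    apply Rinv_le_contravar. nra.
    apply Rmult_le_compat; lra. }
  rewrite Rabs_pos_eq by lra.
  assert (0 <= / ((hk n - y) * (hk n + y))) by (apply Rlt_le, Rinv_0_lt_compat; nra).
  assert (0 <= / (INR n + 1)^2) by (apply Rlt_le, Rinv_0_lt_compat, pow_lt; lra).
  assert (Rabs y <= 1/4) by lra.
  nra.
Qed.

Lemma tan_series_deriv y : Rabs y < 1/4 ->
  derivable_pt_lim (fun y => Series (fun n => tfun n y)) y (PI^2 / (cos (PI*y))^2).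
Proof.
  intros Hy.
  replace (PI^2 / (cos (PI*y))^2) with (Series (fun n => dtfun n y)).
  2:{ rewrite <- sec_series. apply Series_ext. intros n; unfold dtfun. ring.
      apply Rabs_def2 in Hy. lra. }
  apply (series_deriv tfun dtfun 0 quarter (fun n => 32 * / (INR n + 1)^2)).
  - unfold Boule. simpl. rewrite Rminus_0_r. auto.
  - intros n z Hz. unfold Boule in Hz; simpl in Hz; rewrite Rminus_0_r in Hz.
    apply tfun_deriv; auto.
  - intros n z Hz. unfold Boule in Hz; simpl in Hz; rewrite Rminus_0_r in Hz.
    apply dtfun_cont; auto.
  - intros n z Hz. unfold Boule in Hz; simpl in Hz; rewrite Rminus_0_r in Hz.
    apply dtfun_bound; auto.
  - apply ex_series_Cinvsq.
  - intros z Hz. unfold Boule in Hz; simpl in Hz; rewrite Rminus_0_r in Hz.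
    apply (exs_invsq _ 8). intros n; apply tfun_bound; auto.
Qed.

Lemma tan_series y : 0 <= y < 1/4 -> Series (fun n => tfun n y) = PI * tan (PI * y).
Proof.
  intros Hy. pose proof PI_RGT_0. pose proof PI_4.
  set (D := fun z => Series (fun n => tfun n z) - PI * (sin (PI*z) / cos (PI*z))).
  assert (HD : Rabs (D y - D 0) <= 0 * (y - 0)).
  { apply (mvt_bound D (fun _ => 0)). lra.
    - intros c Hc. unfold D.
      assert (Hcos: 0 < cos (PI*c)) by (apply cos_gt_0; nra).
      replace 0 with (PI^2 / (cos (PI*c))^2 - PI^2 / (cos (PI*c))^2) at 1 by ring.
      apply derivable_pt_lim_minus.
      + apply tan_series_deriv. rewrite Rabs_pos_eq; lra.
      + apply is_derive_Reals. auto_derive. lra.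
        pose proof (sin2_cos2 (PI*c)). unfold Rsqr in H1.
        field_simplify; try lra.
        assert (E: cos(PI*c)^2 = 1 - sin(PI*c)^2) by (simpl; lra). rewrite E. field. rewrite <- E. apply pow_nonzero; lra.
    - intros; rewrite Rabs_R0; lra. }
  rewrite Rmult_0_l in HD.
  assert (D0 : D 0 = 0).
  { unfold D. rewrite Rmult_0_r, sin_0, cos_0. unfold tfun.
    rewrite (Series_ext _ (fun _ => 0)) by (intros; rewrite Rminus_0_r, Rplus_0_r; ring). rewrite Series_zero. field. }
  rewrite D0 in HD. unfold D in HD. unfold tan.
  apply Rabs_le_between in HD. lra.
Qed.

Lemma Pr2_eq y : Pr 2 y = (1 - y) * exp (y + y^2/2).
Proof. unfold Pr. simpl. f_equal. f_equal. field. Qed.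

Lemma Pr3_eq y : Pr 3 y = (1 - y) * exp (y + y^2/2 + y^3/3).
Proof. unfold Pr. simpl. f_equal. f_equal. field. Qed.

Lemma hk_eq k : INR (2 * k + 1) / 2 = hk k.
Proof. unfold hk. rewrite plus_INR, mult_INR. simpl. field. Qed.

Definition a2 (k : nat) (x : R) : R := hk k * (ln (1 - x / hk k) - ln (1 + x / hk k)) + 2 * x.
Definition a3 (k : nat) (x : R) : R := (hk k)^2 * (ln (1 - x / hk k) + ln (1 + x / hk k)) + x^2.

Lemma hk_pos k : / 2 <= hk k.
Proof. unfold hk. pose proof (pos_INR k). lra. Qed.

Lemma mc_factor2 x k : Rabs x < 1/2 -> mc_factor 2 x k = exp (a2 k x).
Proof.
  intros Hx. apply Rabs_def2 in Hx. pose proof (hk_pos k).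
  unfold mc_factor. rewrite hk_eq. rewrite !Pr2_eq.
  assert (Hy1 : 0 < 1 - x / hk k).
  { apply (Rmult_lt_reg_r (hk k)). lra. field_simplify; lra. }
  assert (Hy2 : 0 < 1 - - x / hk k).
  { apply (Rmult_lt_reg_r (hk k)). lra. field_simplify; lra. }
  unfold Rpower. simpl pow.
  rewrite ln_mult by (try apply Rmult_lt_0_compat; try apply exp_pos; try apply exp_pos; auto).
  rewrite ln_exp, !ln_mult, !ln_exp by (auto; apply exp_pos).
  unfold a2. f_equal.
  replace (1 - - x / hk k) with (1 + x / hk k) by (field; lra).
  field. lra.
Qed.

Lemma mc_factor3 x k : Rabs x < 1/2 -> mc_factor 3 x k = exp (a3 k x).
Proof.
  intros Hx. apply Rabs_def2 in Hx. pose proof (hk_pos k).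
  unfold mc_factor. rewrite hk_eq. rewrite !Pr3_eq.
  assert (Hy1 : 0 < 1 - x / hk k).
  { apply (Rmult_lt_reg_r (hk k)). lra. field_simplify; lra. }
  assert (Hy2 : 0 < 1 - - x / hk k).
  { apply (Rmult_lt_reg_r (hk k)). lra. field_simplify; lra. }
  unfold Rpower. simpl pow.
  rewrite ln_mult by (try apply Rmult_lt_0_compat; try apply exp_pos; try apply exp_pos; auto).
  rewrite ln_exp, !ln_mult, !ln_exp by (auto; apply exp_pos).
  unfold a3. f_equal.
  replace (1 - - x / hk k) with (1 + x / hk k) by (field; lra).
  field. lra.
Qed.

Lemma a2_deriv k x : Rabs x < 1/4 -> derivable_pt_lim (a2 k) x (- x * tfun k x).
Proof.
  intros Hx. destruct (hk_bound k x Hx). pose proof (pos_INR k). pose proof (hk_pos k).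
  assert (Hy1 : 0 < 1 - x / hk k).
  { apply (Rmult_lt_reg_r (hk k)). lra. field_simplify; lra. }
  assert (Hy2 : 0 < 1 + x / hk k).
  { apply (Rmult_lt_reg_r (hk k)). lra. field_simplify; lra. }
  apply is_derive_Reals. unfold a2, tfun. auto_derive.
  - repeat split; try lra.
  - field. repeat split; intro; nra.
Qed.

Lemma a3_deriv k x : Rabs x < 1/4 -> derivable_pt_lim (a3 k) x (- x^2 * tfun k x).
Proof.
  intros Hx. destruct (hk_bound k x Hx). pose proof (pos_INR k). pose proof (hk_pos k).
  assert (Hy1 : 0 < 1 - x / hk k).
  { apply (Rmult_lt_reg_r (hk k)). lra. field_simplify; lra. }
  assert (Hy2 : 0 < 1 + x / hk k).
  { apply (Rmult_lt_reg_r (hk k)). lra. field_simplify; lra. }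
  apply is_derive_Reals. unfold a3, tfun. auto_derive.
  - repeat split; try lra.
  - field. repeat split; intro; nra.
Qed.

Lemma series_fam_ex (a d : nat -> R -> R) C z :
  Rabs z < 1/4 ->
  (forall k, a k 0 = 0) ->
  (forall k y, Rabs y < 1/4 -> derivable_pt_lim (a k) y (d k y)) ->
  (forall k y, Rabs y < 1/4 -> Rabs (d k y) <= C * / (INR k + 1)^2) ->
  ex_series (fun k => a k z).
Proof.
  intros Hz H0 Hd HB.
  assert (HB0 : forall k y, Rabs y < 1/4 -> Rabs (d k y) <= Rabs C * / (INR k + 1)^2).
  { intros. eapply Rle_trans. apply HB; auto. apply Rmult_le_compat_r.
    apply Rlt_le, Rinv_0_lt_compat, pow_lt. pose proof (pos_INR k); lra. apply Rle_abs. }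
  apply (exs_invsq _ (Rabs C)). intros k.
  destruct (MVT_abs (a k) (d k) 0 z) as [c [Hc1 Hc2]].
  + intros c Hcc. apply Hd. apply Rabs_def2 in Hz. apply Rabs_def1.
    * destruct Hcc. eapply Rle_lt_trans. apply H1. apply Rmax_lub_lt; lra.
    * destruct Hcc. eapply Rlt_le_trans. 2: apply H. apply Rmin_glb_lt; lra.
  + rewrite H0, Rminus_0_r, Rminus_0_r in Hc1. rewrite Hc1.
    assert (Hc' : Rabs c < 1/4).
    { apply Rabs_def2 in Hz. apply Rabs_def1.
      * destruct Hc2. eapply Rle_lt_trans. apply H1. apply Rmax_lub_lt; lra.
      * destruct Hc2. eapply Rlt_le_trans. 2: apply H. apply Rmin_glb_lt; lra. }
    specialize (HB0 k c Hc').
    assert (0 <= Rabs C * / (INR k + 1)^2).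
    { apply Rmult_le_pos. apply Rabs_pos. apply Rlt_le, Rinv_0_lt_compat, pow_lt. pose proof (pos_INR k); lra. }
    assert (Rabs z <= 1) by lra. pose proof (Rabs_pos (d k c)). pose proof (Rabs_pos z).
    nra.
Qed.

Lemma series_fam (a d : nat -> R -> R) C x :
  Rabs x < 1/4 ->
  (forall k, a k 0 = 0) ->
  (forall k y, Rabs y < 1/4 -> derivable_pt_lim (a k) y (d k y)) ->
  (forall k y, Rabs y < 1/4 -> continuity_pt (d k) y) ->
  (forall k y, Rabs y < 1/4 -> Rabs (d k y) <= C * / (INR k + 1)^2) ->
  derivable_pt_lim (fun y => Series (fun k => a k y)) x (Series (fun k => d k x)).
Proof.
  intros Hx H0 Hd Hc HB.
  assert (HB0 : forall k y, Rabs y < 1/4 -> Rabs (d k y) <= Rabs C * / (INR k + 1)^2).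
  { intros. eapply Rle_trans. apply HB; auto. apply Rmult_le_compat_r.
    apply Rlt_le, Rinv_0_lt_compat, pow_lt. pose proof (pos_INR k); lra. apply Rle_abs. }
  apply (series_deriv a d 0 quarter (fun k => Rabs C * / (INR k + 1)^2)).
  - unfold Boule; simpl; rewrite Rminus_0_r; auto.
  - intros n z Hz. unfold Boule in Hz; simpl in Hz; rewrite Rminus_0_r in Hz. auto.
  - intros n z Hz. unfold Boule in Hz; simpl in Hz; rewrite Rminus_0_r in Hz. auto.
  - intros n z Hz. unfold Boule in Hz; simpl in Hz; rewrite Rminus_0_r in Hz. auto.
  - apply ex_series_Cinvsq.
  - intros z Hz. unfold Boule in Hz; simpl in Hz; rewrite Rminus_0_r in Hz.
    apply (series_fam_ex a d C z); auto.
Qed.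

Definition f2 (x : R) : R := Series (fun k => a2 k x).
Definition f3 (x : R) : R := Series (fun k => a3 k x).

Lemma a2_0 k : a2 k 0 = 0.
Proof. unfold a2. unfold Rdiv. rewrite Rmult_0_l, Rminus_0_r, Rplus_0_r, ln_1. ring. Qed.
Lemma a3_0 k : a3 k 0 = 0.
Proof. unfold a3. unfold Rdiv. rewrite Rmult_0_l, Rminus_0_r, Rplus_0_r, ln_1. ring. Qed.

Lemma tfun_cont k y : Rabs y < 1/4 -> continuity_pt (tfun k) y.
Proof. intros H. apply (cont_of_deriv _ _ _ (tfun_deriv k y H)). Qed.

Lemma d2_cont k y : Rabs y < 1/4 -> continuity_pt (fun y => - y * tfun k y) y.
Proof.
  intros H. apply (continuity_pt_mult (fun y => - y) (tfun k)).
  apply (cont_of_deriv _ _ (-1)). apply is_derive_Reals. auto_derive; auto; ring.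
  apply tfun_cont; auto.
Qed.

Lemma d3_cont k y : Rabs y < 1/4 -> continuity_pt (fun y => - y^2 * tfun k y) y.
Proof.
  intros H. apply (continuity_pt_mult (fun y => - y^2) (tfun k)).
  apply (cont_of_deriv _ _ (-2*y)). apply is_derive_Reals. auto_derive; auto; ring.
  apply tfun_cont; auto.
Qed.

Lemma d2_bound k y : Rabs y < 1/4 -> Rabs (- y * tfun k y) <= 2 * / (INR k + 1)^2.
Proof.
  intros H. rewrite Rabs_mult, Rabs_Ropp. pose proof (tfun_bound k y H).
  pose proof (Rabs_pos y). pose proof (Rabs_pos (tfun k y)).
  assert (0 <= / (INR k + 1)^2) by (apply Rlt_le, Rinv_0_lt_compat, pow_lt; pose proof (pos_INR k); lra).
  nra.
Qed.

Lemma d3_bound k y : Rabs y < 1/4 -> Rabs (- y^2 * tfun k y) <= 1/2 * / (INR k + 1)^2.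
Proof.
  intros H. rewrite Rabs_mult, Rabs_Ropp, <- RPow_abs. pose proof (tfun_bound k y H).
  pose proof (Rabs_pos y). pose proof (Rabs_pos (tfun k y)).
  assert (0 <= / (INR k + 1)^2) by (apply Rlt_le, Rinv_0_lt_compat, pow_lt; pose proof (pos_INR k); lra).
  assert (Rabs y ^2 <= 1/16) by (simpl; nra).
  assert (0 <= Rabs y ^2) by (simpl; nra).
  nra.
Qed.

Lemma f2_deriv x : 0 <= x < 1/4 -> derivable_pt_lim f2 x (- x * (PI * tan (PI * x))).
Proof.
  intros Hx. assert (Hx' : Rabs x < 1/4) by (rewrite Rabs_pos_eq; lra).
  rewrite <- tan_series by auto. rewrite <- Series_scal_l.
  apply (series_fam a2 (fun k y => - y * tfun k y) 2 x Hx').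
  apply a2_0. apply a2_deriv. apply d2_cont. apply d2_bound.
Qed.

Lemma f3_deriv x : 0 <= x < 1/4 -> derivable_pt_lim f3 x (- x^2 * (PI * tan (PI * x))).
Proof.
  intros Hx. assert (Hx' : Rabs x < 1/4) by (rewrite Rabs_pos_eq; lra).
  rewrite <- tan_series by auto. rewrite <- Series_scal_l.
  apply (series_fam a3 (fun k y => - y^2 * tfun k y) (1/2) x Hx').
  apply a3_0. apply a3_deriv. apply d3_cont. apply d3_bound.
Qed.

Lemma f2_0 : f2 0 = 0.
Proof. unfold f2. rewrite (Series_ext _ (fun _ => 0)) by apply a2_0. apply Series_zero. Qed.
Lemma f3_0 : f3 0 = 0.
Proof. unfold f3. rewrite (Series_ext _ (fun _ => 0)) by apply a3_0. apply Series_zero. Qed.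

Lemma mcos_exp (r : nat) (a : nat -> R -> R) x :
  (forall k, mc_factor r x k = exp (a k x)) -> ex_series (fun k => a k x) ->
  mcos r x = exp (Series (fun k => a k x)).
Proof.
  intros Hf He. unfold mcos.
  assert (HP : forall N, mc_partial r x (S N) = exp (sum_f_R0 (fun k => a k x) N)).
  { induction N. simpl. rewrite Hf. ring.
    change (mc_partial r x (S (S N))) with (mc_partial r x (S N) * mc_factor r x (S N)).
    rewrite IHN, Hf, tech5, exp_plus. reflexivity. }
  rewrite <- Lim_seq_incr_1.
  rewrite (Lim_seq_ext _ (fun N => exp (sum_f_R0 (fun k => a k x) N))) by auto.
  rewrite (is_lim_seq_unique _ (exp (Series (fun k => a k x)))). reflexivity.
  apply (is_lim_seq_continuous exp). apply derivable_continuous_pt, derivable_pt_exp.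
  apply is_lim_seq_Reals. apply series_partial_cv; auto.
Qed.

Lemma mcos2_eq x : 0 <= x < 1/4 -> mcos 2 x = exp (f2 x).
Proof.
  intros Hx. assert (Hx' : Rabs x < 1/4) by (rewrite Rabs_pos_eq; lra).
  apply mcos_exp. intros k; apply mc_factor2; lra.
  apply (series_fam_ex a2 (fun k y => - y * tfun k y) 2 x Hx').
  apply a2_0. apply a2_deriv. apply d2_bound.
Qed.

Lemma mcos3_eq x : 0 <= x < 1/4 -> mcos 3 x = exp (f3 x).
Proof.
  intros Hx. assert (Hx' : Rabs x < 1/4) by (rewrite Rabs_pos_eq; lra).
  apply mcos_exp. intros k; apply mc_factor3; lra.
  apply (series_fam_ex a3 (fun k y => - y^2 * tfun k y) (1/2) x Hx').
  apply a3_0. apply a3_deriv. apply d3_bound.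
Qed.

Lemma ex_series_geom_scal C q : Rabs q < 1 -> ex_series (fun n => C * q^n).
Proof.
  intros H. apply (ex_series_ext (fun n => q^n * C)). intros; apply Rmult_comm.
  apply ex_series_scal_r, ex_series_geom; auto.
Qed.

Lemma cos_rec k t : cos (INR (S (S k)) * t) = 2 * cos t * cos (INR (S k) * t) - cos (INR k * t).
Proof.
  rewrite !S_INR.
  assert (E1 : (INR k + 1 + 1) * t = (INR k + 1) * t + t) by ring.
  assert (E2 : INR k * t = (INR k + 1) * t - t) by ring.
  rewrite E1, E2, cos_plus, cos_minus. ring.
Qed.

Lemma geom_cos q t : Rabs q < 1 ->
  Series (fun k => q^k * cos (INR (S k) * t)) = (cos t - q) / (1 - 2 * q * cos t + q^2).
Proof.
  intros Hq.
  assert (Hex : forall j, ex_series (fun k => q^k * cos (INR (k + j) * t))).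
  { intros j. apply (exs_le _ (fun k => 1 * Rabs q ^ k)).
    - intros k. rewrite Rabs_mult, RPow_abs. pose proof (COS_bound (INR (k+j) * t)).
      assert (Rabs (cos (INR (k + j) * t)) <= 1) by (apply Rabs_le; lra).
      pose proof (pow_le (Rabs q) k (Rabs_pos q)).
      pose proof (Rabs_pos (q^k)). nra.
    - apply ex_series_geom_scal. rewrite Rabs_Rabsolu; auto. }
  set (Sg := Series (fun k => q^k * cos (INR (S k) * t))).
  set (Ug := Series (fun k => q^k * cos (INR (S (S k)) * t))).
  set (Vg := Series (fun k => q^k * cos (INR k * t))).
  assert (HS : ex_series (fun k => q^k * cos (INR (S k) * t))).
  { apply (ex_series_ext (fun k => q^k * cos (INR (k + 1) * t))); auto.
    intros; repeat f_equal; lia. }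
  assert (HU : ex_series (fun k => q^k * cos (INR (S (S k)) * t))).
  { apply (ex_series_ext (fun k => q^k * cos (INR (k + 2) * t))); auto.
    intros; repeat f_equal; lia. }
  assert (HV : ex_series (fun k => q^k * cos (INR k * t))).
  { apply (ex_series_ext (fun k => q^k * cos (INR (k + 0) * t))); auto.
    intros; repeat f_equal; lia. }
  assert (E1 : Vg = 1 + q * Sg).
  { unfold Vg. rewrite Series_incr_1 by auto. simpl (INR 0). rewrite Rmult_0_l, cos_0.
    unfold Sg. rewrite <- Series_scal_l. f_equal; [simpl; ring | apply Series_ext; intros; simpl; ring]. }
  assert (E2 : Sg = cos t + q * Ug).
  { unfold Sg at 1. rewrite Series_incr_1 by auto. simpl (INR 1). rewrite Rmult_1_l.
    unfold Ug. rewrite <- Series_scal_l. f_equal; [f_equal; ring | apply Series_ext; intros; simpl; ring]. }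
  assert (E3 : Ug = 2 * cos t * Sg - Vg).
  { unfold Ug, Sg, Vg. rewrite <- Series_scal_l, <- Series_minus.
    apply Series_ext. intros k. rewrite cos_rec. ring.
    apply (ex_series_ext (fun k => (q^k * cos (INR (S k) * t)) * (2 * cos t))). intros; apply Rmult_comm.
    apply ex_series_scal_r; auto. auto. }
  assert (Hd : 0 < 1 - 2 * q * cos t + q^2).
  { pose proof (COS_bound t). apply Rabs_def2 in Hq.
    assert (- 2 * q * cos t >= - 2 * Rabs q) by (destruct (Rle_or_lt 0 q); [rewrite Rabs_pos_eq by lra| rewrite Rabs_left by lra]; nra).
    destruct (Rle_or_lt 0 q); [rewrite Rabs_pos_eq in H0 by lra| rewrite Rabs_left in H0 by lra]; nra. }
  assert (HH : Sg * (1 - 2*q*cos t + q^2) = cos t - q).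
  { rewrite E3, E1 in E2. simpl. nra. }
  rewrite <- HH. field. lra.
Qed.

Lemma pos_quad s t : Rabs s < 1 -> 0 < 1 + 2 * s * cos t + s^2.
Proof.
  intros Hs. pose proof (COS_bound t). apply Rabs_def2 in Hs.
  destruct (Rle_or_lt 0 s); nra.
Qed.

Definition fterm (t : R) (k : nat) (s : R) : R := (-1)^k * cos (INR (S k) * t) / INR (S k) * s^(S k).
Definition dfterm (t : R) (k : nat) (s : R) : R := (-1)^k * cos (INR (S k) * t) * s^k.

Lemma fterm_deriv t k s : derivable_pt_lim (fterm t k) s (dfterm t k s).
Proof.
  apply is_derive_Reals. unfold fterm, dfterm. auto_derive; auto.
  change (match k with 0%nat => 1 | S _ => INR k + 1 end) with (INR (S k)).
  assert (INR (S k) <> 0) by (apply not_0_INR; lia). field. auto.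
Qed.

Lemma dfterm_cont t k s : continuity_pt (dfterm t k) s.
Proof.
  apply (cont_of_deriv _ _ ((-1)^k * cos (INR (S k) * t) * (INR k * s^(pred k)))).
  apply is_derive_Reals. unfold dfterm. auto_derive; auto.
  change (match k with 0%nat => 1 | S _ => INR k + 1 end) with (INR (S k)). ring.
Qed.

Lemma sign_cos_bound k t : Rabs ((-1)^k * cos (INR (S k) * t)) <= 1.
Proof.
  rewrite Rabs_mult, pow_1_abs, Rmult_1_l. pose proof (COS_bound (INR (S k) * t)).
  apply Rabs_le; lra.
Qed.

Lemma fterm_bound t k s : Rabs (fterm t k s) <= Rabs s ^ (S k).
Proof.
  unfold fterm. rewrite Rabs_mult, <- RPow_abs.
  assert (Rabs ((-1)^k * cos (INR (S k) * t) / INR (S k)) <= 1).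
  { unfold Rdiv. rewrite Rabs_mult. pose proof (sign_cos_bound k t).
    rewrite (Rabs_pos_eq (/ INR (S k))) by (apply Rlt_le, Rinv_0_lt_compat, lt_0_INR; lia).
    assert (/ INR (S k) <= 1).
    { rewrite S_INR. pose proof (pos_INR k). replace 1 with (/1) by field.
      apply Rinv_le_contravar; lra. }
    pose proof (Rabs_pos ((-1) ^ k * cos (INR (S k) * t))).
    assert (0 <= / INR (S k)) by (apply Rlt_le, Rinv_0_lt_compat, lt_0_INR; lia).
    nra. }
  pose proof (pow_le _ (S k) (Rabs_pos s)). nra.
Qed.

Lemma dfterm_bound t k s : Rabs (dfterm t k s) <= Rabs s ^ k.
Proof.
  unfold dfterm. rewrite Rabs_mult, <- RPow_abs. pose proof (sign_cos_bound k t).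
  pose proof (pow_le _ k (Rabs_pos s)). pose proof (Rabs_pos ((-1) ^ k * cos (INR (S k) * t))). nra.
Qed.

Lemma fourier_r t r : 0 <= r < 1 ->
  Series (fun k => fterm t k r) = ln (1 + 2 * r * cos t + r^2) / 2.
Proof.
  intros Hr.
  assert (Hrho : 0 < (1 + r)/2) by lra.
  set (rho := mkposreal _ Hrho).
  assert (Hball : forall s, 0 <= s <= r -> Boule 0 rho s).
  { intros s Hs. unfold Boule; simpl. rewrite Rminus_0_r, Rabs_pos_eq; lra. }
  assert (Hb : forall s, Boule 0 rho s -> Rabs s < (1+r)/2).
  { intros s Hs. unfold Boule in Hs; simpl in Hs. rewrite Rminus_0_r in Hs. auto. }
  assert (Hgeo : ex_series (fun k => ((1 + r)/2)^k)).
  { apply ex_series_geom. rewrite Rabs_pos_eq; lra. }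
  set (D := fun s => Series (fun k => fterm t k s) - ln (1 + 2 * s * cos t + s^2) / 2).
  assert (HD : Rabs (D r - D 0) <= 0 * (r - 0)).
  { apply (mvt_bound D (fun _ => 0)). lra.
    - intros c Hc. unfold D.
      pose proof (Hb c (Hball c Hc)) as Hc'.
      assert (Hq : 0 < 1 + 2 * c * cos t + c^2) by (apply pos_quad; lra).
      replace 0 with ((cos t + c) / (1 + 2 * c * cos t + c^2) - (cos t + c) / (1 + 2 * c * cos t + c^2)) at 1 by ring.
      apply derivable_pt_lim_minus.
      + replace ((cos t + c) / (1 + 2 * c * cos t + c^2)) with (Series (fun k => dfterm t k c)).
        * apply (series_deriv (fterm t) (dfterm t) 0 rho (fun k => ((1+r)/2)^k)).
          -- apply Hball; auto.
          -- intros; apply fterm_deriv.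
          -- intros; apply dfterm_cont.
          -- intros n y Hy. eapply Rle_trans. apply dfterm_bound. apply pow_incr.
             split. apply Rabs_pos. apply Rlt_le, Hb; auto.
          -- auto.
          -- intros y Hy. apply (exs_le _ (fun k => ((1+r)/2)^k)); auto.
             intros k. eapply Rle_trans. apply fterm_bound.
             pose proof (Hb y Hy). pose proof (Rabs_pos y).
             eapply Rle_trans. apply pow_incr. split. apply Rabs_pos. apply Rlt_le. apply H.
             simpl. rewrite <- (Rmult_1_l (((1+r)/2)^k)) at 2. apply Rmult_le_compat_r.
             apply pow_le; lra. lra.
        * rewrite (Series_ext _ (fun k => (-c)^k * cos (INR (S k) * t))).
          rewrite geom_cos. field. lra.
          rewrite Rabs_Ropp; lra.
          intros k. unfold dfterm. replace (- c) with ((-1) * c) by ring.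
          rewrite Rpow_mult_distr. ring.
      + apply is_derive_Reals. auto_derive. lra. field. lra.
    - intros; rewrite Rabs_R0; lra. }
  rewrite Rmult_0_l in HD. apply Rabs_le_between in HD.
  assert (D0 : D 0 = 0).
  { unfold D. rewrite (Series_ext _ (fun _ => 0)).
    rewrite Series_zero. replace (1 + 2 * 0 * cos t + 0^2) with 1 by ring. rewrite ln_1. field.
    intros k. unfold fterm. simpl. ring. }
  rewrite D0 in HD. unfold D in HD. lra.
Qed.

Definition Lr (r x : R) : R := ln (1 + 2 * r * cos (2*PI*x) + r^2) / 2.
Definition Lr' (r x : R) : R := - 2 * PI * r * sin (2*PI*x) / (1 + 2 * r * cos (2*PI*x) + r^2).

Lemma Lr_deriv r x : 0 <= r < 1 -> derivable_pt_lim (Lr r) x (Lr' r x).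
Proof.
  intros Hr. assert (H : 0 < 1 + 2 * r * cos (2*PI*x) + r^2) by (apply pos_quad; rewrite Rabs_pos_eq; lra).
  apply is_derive_Reals. unfold Lr, Lr'. auto_derive. lra. field. lra.
Qed.

Lemma cos_small x : 0 <= x <= 1/6 -> 3/4 <= cos (PI*x)^2 /\ 0 < cos (PI * x).
Proof.
  intros Hx. pose proof PI_RGT_0.
  assert (cos (PI/6) <= cos (PI*x)) by (apply cos_decr_1; nra).
  rewrite cos_PI6 in H0.
  assert (Hs : sqrt 3 * sqrt 3 = 3) by (apply sqrt_sqrt; lra).
  assert (0 < sqrt 3) by (apply sqrt_lt_R0; lra).
  split; nra.
Qed.

Lemma tan_Lr_bound r x : 0 <= r < 1 -> 0 <= x <= 1/6 ->
  Rabs (PI * tan (PI*x) + Lr' r x) <= 2 * PI * (1 - r)^2.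
Proof.
  intros Hr Hx. pose proof PI_RGT_0. destruct (cos_small x Hx) as [Hc2 Hc].
  assert (Hs : 0 <= sin (PI*x)) by (apply sin_ge_0; nra).
  assert (Hs1 : sin (PI*x) <= 1) by (pose proof (SIN_bound (PI*x)); lra).
  unfold Lr', tan.
  replace (2*PI*x) with (2*(PI*x)) by ring. rewrite sin_2a, cos_2a_cos.
  set (s := sin (PI*x)) in *. set (c := cos (PI*x)) in *.
  assert (HD : 1 <= (1 - r)^2 + 4 * r * c^2) by nra.
  assert (E : PI * (s / c) + - 2 * PI * r * (2 * s * c) / (1 + 2 * r * (2 * c * c - 1) + r ^ 2)
     = PI * s * (1 - r)^2 / (c * ((1 - r)^2 + 4 * r * c^2))).
  { field. split. nra. lra. }
  rewrite E. rewrite Rabs_pos_eq.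
  2:{ apply Rmult_le_pos. apply Rmult_le_pos; nra. apply Rlt_le, Rinv_0_lt_compat. nra. }
  assert (Hc' : 1/2 <= c) by nra.
  apply (Rmult_le_reg_r (c * ((1 - r)^2 + 4 * r * c^2))). nra.
  unfold Rdiv. rewrite Rmult_assoc, Rinv_l by nra. rewrite Rmult_1_r.
  assert (0 <= (1-r)^2) by nra.
  assert (PI * s * (1-r)^2 <= PI * (1-r)^2) by (apply Rmult_le_compat_r; nra).
  assert (1 <= 2 * (c * ((1 - r)^2 + 4 * r * c^2))) by nra.
  assert (PI*(1-r)^2 * 1 <= PI*(1-r)^2 * (2 * (c * ((1 - r)^2 + 4 * r * c^2)))).
  { apply Rmult_le_compat_l; nra. }
  lra.
Qed.

Ltac fixINR k := change (match k with 0%nat => 1 | S _ => INR k + 1 end) with (INR (S k)) in *.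

Definition gterm (r : R) (k : nat) (x : R) : R :=
  (-1)^k * sin (INR (S k) * (2*PI*x)) / INR (S k)^2 * r^(S k).
Definition jterm (r : R) (k : nat) (x : R) : R :=
  (-1)^k / INR (S k) * r^(S k) *
  (x * sin (INR (S k) * (2*PI*x)) / (2*PI*INR (S k)) + (cos (INR (S k) * (2*PI*x)) - 1) / (4*PI^2*INR (S k)^2)).

Lemma INRS_pos k : 1 <= INR (S k).
Proof. rewrite S_INR. pose proof (pos_INR k). lra. Qed.

Lemma gterm_deriv r k x : derivable_pt_lim (gterm r k) x (2*PI * fterm (2*PI*x) k r).
Proof.
  pose proof (INRS_pos k). apply is_derive_Reals. unfold gterm, fterm. auto_derive; auto.
  fixINR k. rewrite <- ?tech_pow_Rmult. field. lra.
Qed.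

Lemma jterm_deriv r k x : derivable_pt_lim (jterm r k) x (x * fterm (2*PI*x) k r).
Proof.
  pose proof (INRS_pos k). pose proof PI_RGT_0. apply is_derive_Reals. unfold jterm, fterm. auto_derive.
  repeat split; nra.
  fixINR k. rewrite <- ?tech_pow_Rmult. field. split; lra.
Qed.

Lemma pow_S_le r k : 0 <= r <= 1 -> r^(S k) <= r^k.
Proof. intros. simpl. pose proof (pow_le r k ltac:(lra)). nra. Qed.

Lemma gterm_bound r k x : 0 <= r < 1 -> Rabs (gterm r k x) <= r^k.
Proof.
  intros Hr. pose proof (INRS_pos k). unfold gterm.
  rewrite Rabs_mult. rewrite (Rabs_pos_eq (r^(S k))) by (apply pow_le; lra).
  assert (Rabs ((-1) ^ k * sin (INR (S k) * (2 * PI * x)) / INR (S k) ^ 2) <= 1).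
  { unfold Rdiv. rewrite !Rabs_mult, pow_1_abs, Rmult_1_l.
    pose proof (SIN_bound (INR (S k) * (2 * PI * x))).
    assert (Rabs (sin (INR (S k) * (2 * PI * x))) <= 1) by (apply Rabs_le; lra).
    rewrite (Rabs_pos_eq (/ INR (S k) ^ 2)) by (apply Rlt_le, Rinv_0_lt_compat, pow_lt; lra).
    assert (/ INR (S k)^2 <= 1).
    { rewrite <- Rinv_1. apply Rinv_le_contravar. lra.
      rewrite <- (pow1 2). apply pow_incr; lra. }
    pose proof (Rabs_pos (sin (INR (S k) * (2 * PI * x)))).
    assert (0 <= / INR (S k)^2) by (apply Rlt_le, Rinv_0_lt_compat, pow_lt; lra).
    nra. }
  pose proof (pow_S_le r k ltac:(lra)). pose proof (pow_le r (S k) ltac:(lra)). nra.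
Qed.

Lemma jterm_bound r k x : 0 <= r < 1 -> Rabs x < 1 -> Rabs (jterm r k x) <= 2 * r^k.
Proof.
  intros Hr Hx. pose proof (INRS_pos k). pose proof PI2_3_2. unfold jterm.
  set (m := INR (S k)) in *.
  set (u := sin (m * (2 * PI * x))). set (v := cos (m * (2 * PI * x))).
  assert (Hu : Rabs u <= 1) by (apply Rabs_le; apply SIN_bound).
  assert (Hv : Rabs v <= 1) by (apply Rabs_le; apply COS_bound).
  assert (A : Rabs (x * u / (2 * PI * m)) <= 1).
  { unfold Rdiv. rewrite !Rabs_mult. rewrite (Rabs_pos_eq (/ _)) by (apply Rlt_le, Rinv_0_lt_compat; nra).
    assert (/ (2*PI*m) <= 1) by (rewrite <- Rinv_1; apply Rinv_le_contravar; nra).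
    assert (0 <= / (2*PI*m)) by (apply Rlt_le, Rinv_0_lt_compat; nra).
    pose proof (Rabs_pos x). pose proof (Rabs_pos u).
    assert (Rabs x * Rabs u <= 1) by nra. assert (0 <= Rabs x * Rabs u) by nra. nra. }
  assert (B : Rabs ((v - 1) / (4 * PI^2 * m^2)) <= 1).
  { assert (Hpm : 2 <= 4*PI^2*m^2).
    { assert (1 <= m^2) by (rewrite <- (pow1 2); apply pow_incr; lra).
      assert (1 <= PI^2) by (rewrite <- (pow1 2); apply pow_incr; lra).
      assert (1 <= PI^2 * m^2) by nra. lra. }
    unfold Rdiv. rewrite !Rabs_mult. rewrite (Rabs_pos_eq (/ _)) by (apply Rlt_le, Rinv_0_lt_compat; lra).
    assert (/ (4*PI^2*m^2) <= 1/2) by (replace (1/2) with (/2) by field; apply Rinv_le_contravar; lra).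
    assert (0 <= / (4*PI^2*m^2)) by (apply Rlt_le, Rinv_0_lt_compat; lra).
    assert (Rabs (v - 1) <= 2) by (apply Rabs_le; apply Rabs_le_between in Hv; lra).
    pose proof (Rabs_pos (v-1)). nra. }
  assert (C : Rabs ((-1)^k / m * r^(S k)) <= r^k).
  { unfold Rdiv. rewrite !Rabs_mult, pow_1_abs, Rmult_1_l.
    rewrite (Rabs_pos_eq (/ m)) by (apply Rlt_le, Rinv_0_lt_compat; lra).
    rewrite (Rabs_pos_eq (r^(S k))) by (apply pow_le; lra).
    assert (/ m <= 1) by (rewrite <- Rinv_1; apply Rinv_le_contravar; lra).
    assert (0 <= / m) by (apply Rlt_le, Rinv_0_lt_compat; lra).
    pose proof (pow_S_le r k ltac:(lra)). pose proof (pow_le r (S k) ltac:(lra)). nra. }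
  rewrite Rabs_mult.
  pose proof (Rabs_triang (x * u / (2 * PI * m)) ((v - 1) / (4 * PI^2 * m^2))).
  pose proof (Rabs_pos ((-1)^k / m * r^(S k))). pose proof (Rabs_pos (x * u / (2 * PI * m) + (v - 1) / (4 * PI ^ 2 * m ^ 2))).
  nra.
Qed.

Definition Gr (r x : R) : R := Series (fun k => gterm r k x).
Definition Jr (r x : R) : R := Series (fun k => jterm r k x).

Definition unit_ball : posreal := mkposreal 1 ltac:(lra).

Lemma ex_geom_r C r : 0 <= r < 1 -> ex_series (fun k => C * r^k).
Proof. intros. apply ex_series_geom_scal. rewrite Rabs_pos_eq; lra. Qed.

Lemma Gr_deriv r x : 0 <= r < 1 -> Rabs x < 1 -> derivable_pt_lim (Gr r) x (2 * PI * Lr r x).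
Proof.
  intros Hr Hx. unfold Lr. rewrite <- fourier_r by auto. rewrite <- Series_scal_l.
  apply (series_deriv (gterm r) (fun k x => 2 * PI * fterm (2*PI*x) k r) 0 unit_ball (fun k => 2 * PI * r^k)).
  - unfold Boule; simpl; rewrite Rminus_0_r; auto.
  - intros; apply gterm_deriv.
  - intros n y _. apply cont_ex. unfold fterm. auto_derive. auto.
  - intros n y _. rewrite Rabs_mult. pose proof PI_RGT_0. rewrite Rabs_pos_eq by lra.
    apply Rmult_le_compat_l. lra. eapply Rle_trans. apply fterm_bound.
    rewrite Rabs_pos_eq by lra. apply pow_S_le. lra.
  - apply ex_geom_r; auto.
  - intros y _. apply (exs_le _ (fun k => 1 * r^k)). intros k. rewrite Rmult_1_l. apply gterm_bound; auto.
    apply ex_geom_r; auto.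
Qed.

Lemma Jr_deriv r x : 0 <= r < 1 -> Rabs x < 1 -> derivable_pt_lim (Jr r) x (x * Lr r x).
Proof.
  intros Hr Hx. unfold Lr. rewrite <- fourier_r by auto. rewrite <- Series_scal_l.
  apply (series_deriv (jterm r) (fun k x => x * fterm (2*PI*x) k r) 0 unit_ball (fun k => 1 * r^k)).
  - unfold Boule; simpl; rewrite Rminus_0_r; auto.
  - intros; apply jterm_deriv.
  - intros n y _. apply cont_ex. unfold fterm. auto_derive. auto.
  - intros n y Hy. unfold Boule in Hy; simpl in Hy; rewrite Rminus_0_r in Hy.
    rewrite Rabs_mult. pose proof (fterm_bound (2*PI*y) n r).
    rewrite (Rabs_pos_eq r) in H by lra. pose proof (pow_S_le r n ltac:(lra)).
    pose proof (Rabs_pos y). pose proof (Rabs_pos (fterm (2 * PI * y) n r)).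
    assert (Rabs y * Rabs (fterm (2 * PI * y) n r) <= Rabs (fterm (2 * PI * y) n r)) by nra. lra.
  - apply ex_geom_r; auto.
  - intros y Hy. unfold Boule in Hy; simpl in Hy; rewrite Rminus_0_r in Hy.
    apply (exs_le _ (fun k => 2 * r^k)). intros k. apply jterm_bound; auto.
    apply ex_geom_r; auto.
Qed.

Definition F2r (r x : R) : R := x * Lr r x - / (2*PI) * Gr r x.
Definition F3r (r x : R) : R := x^2 * Lr r x - 2 * Jr r x.

Lemma Gr_0 r : Gr r 0 = 0.
Proof.
  unfold Gr. rewrite (Series_ext _ (fun _ => 0)). apply Series_zero.
  intros k. unfold gterm. rewrite Rmult_0_r, Rmult_0_r, sin_0. unfold Rdiv. ring.
Qed.

Lemma Jr_0 r : Jr r 0 = 0.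
Proof.
  unfold Jr. rewrite (Series_ext _ (fun _ => 0)). apply Series_zero.
  intros k. unfold jterm. rewrite Rmult_0_r, Rmult_0_r, cos_0. unfold Rdiv. ring.
Qed.

Lemma F2r_deriv r x : 0 <= r < 1 -> Rabs x < 1 -> derivable_pt_lim (F2r r) x (x * Lr' r x).
Proof.
  intros Hr Hx. pose proof PI_RGT_0.
  replace (x * Lr' r x) with ((1 * Lr r x + x * Lr' r x) - / (2 * PI) * (2 * PI * Lr r x)) by (field; lra).
  apply (derivable_pt_lim_minus (fun x => x * Lr r x) (fun x => / (2*PI) * Gr r x)).
  - apply (derivable_pt_lim_mult (fun x => x) (Lr r)). apply derivable_pt_lim_id. apply Lr_deriv; auto.
  - apply (derivable_pt_lim_scal (Gr r)). apply Gr_deriv; auto.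
Qed.

Lemma F3r_deriv r x : 0 <= r < 1 -> Rabs x < 1 -> derivable_pt_lim (F3r r) x (x^2 * Lr' r x).
Proof.
  intros Hr Hx. pose proof PI_RGT_0.
  replace (x^2 * Lr' r x) with ((2 * x * Lr r x + x^2 * Lr' r x) - 2 * (x * Lr r x)) by ring.
  apply (derivable_pt_lim_minus (fun x => x^2 * Lr r x) (fun x => 2 * Jr r x)).
  - apply (derivable_pt_lim_mult (fun x => x^2) (Lr r)).
    + apply is_derive_Reals. auto_derive; auto. ring.
    + apply Lr_deriv; auto.
  - apply (derivable_pt_lim_scal (Jr r)). apply Jr_deriv; auto.
Qed.

Lemma f2_F2r r : 0 <= r < 1 -> Rabs (f2 (1/6) - F2r r (1/6)) <= PI / 18 * (1 - r)^2.
Proof.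
  intros Hr. pose proof PI_RGT_0.
  set (D := fun x => f2 x - F2r r x).
  assert (HM : Rabs (D (1/6) - D 0) <= (1/6 * (2 * PI * (1 - r)^2)) * (1/6 - 0)).
  { apply (mvt_bound D (fun x => - x * (PI * tan (PI * x)) - x * Lr' r x)). lra.
    - intros c Hc. apply (derivable_pt_lim_minus f2 (F2r r)).
      apply f2_deriv; lra. apply F2r_deriv; auto. rewrite Rabs_pos_eq; lra.
    - intros c Hc. replace (- c * (PI * tan (PI * c)) - c * Lr' r c) with (- c * (PI * tan (PI * c) + Lr' r c)) by ring.
      rewrite Rabs_mult, Rabs_Ropp, (Rabs_pos_eq c) by lra.
      pose proof (tan_Lr_bound r c Hr Hc). pose proof (Rabs_pos (PI * tan (PI * c) + Lr' r c)).
      apply Rmult_le_compat; lra. }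
  assert (D0 : D 0 = 0).
  { unfold D, F2r. rewrite f2_0, Gr_0. ring. }
  rewrite D0, Rminus_0_r in HM. unfold D in HM. eapply Rle_trans. apply HM. lra.
Qed.

Lemma f3_F3r r : 0 <= r < 1 -> Rabs (f3 (1/6) - F3r r (1/6)) <= PI / 108 * (1 - r)^2.
Proof.
  intros Hr. pose proof PI_RGT_0.
  set (D := fun x => f3 x - F3r r x).
  assert (HM : Rabs (D (1/6) - D 0) <= (1/36 * (2 * PI * (1 - r)^2)) * (1/6 - 0)).
  { apply (mvt_bound D (fun x => - x^2 * (PI * tan (PI * x)) - x^2 * Lr' r x)). lra.
    - intros c Hc. apply (derivable_pt_lim_minus f3 (F3r r)).
      apply f3_deriv; lra. apply F3r_deriv; auto. rewrite Rabs_pos_eq; lra.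
    - intros c Hc. replace (- c^2 * (PI * tan (PI * c)) - c^2 * Lr' r c) with (- c^2 * (PI * tan (PI * c) + Lr' r c)) by ring.
      rewrite Rabs_mult, Rabs_Ropp, (Rabs_pos_eq (c^2)) by (apply pow_le; lra).
      pose proof (tan_Lr_bound r c Hr Hc). pose proof (Rabs_pos (PI * tan (PI * c) + Lr' r c)).
      assert (c^2 <= 1/36) by (simpl; nra). assert (0 <= c^2) by (apply pow_le; lra).
      apply Rmult_le_compat; lra. }
  assert (D0 : D 0 = 0).
  { unfold D, F3r. rewrite f3_0, Jr_0. ring. }
  rewrite D0, Rminus_0_r in HM. unfold D in HM. eapply Rle_trans. apply HM. lra.
Qed.

Definition psi (t : R) : R := 2 * t / (1 + t^2).

Lemma psi_bound t : Rabs (psi t) <= 1.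
Proof.
  unfold psi. assert (0 < 1 + t^2) by (simpl; nra).
  unfold Rdiv. rewrite Rabs_mult, (Rabs_pos_eq (/ _)) by (apply Rlt_le, Rinv_0_lt_compat; lra).
  apply (Rmult_le_reg_r (1 + t^2)); auto. rewrite Rmult_assoc, Rinv_l by lra.
  rewrite Rmult_1_r, Rmult_1_l. pose proof (pow2_ge_0 (t-1)); pose proof (pow2_ge_0 (t+1)). apply Rabs_le. split; simpl in *; nra.
Qed.

Lemma psi_range t : 0 <= t < 1 -> 0 <= psi t < 1.
Proof.
  intros Ht. unfold psi. assert (0 < 1 + t^2) by (simpl; nra).
  split.
  - apply Rmult_le_pos. lra. apply Rlt_le, Rinv_0_lt_compat; lra.
  - apply (Rmult_lt_reg_r (1 + t^2)); auto. unfold Rdiv. rewrite Rmult_assoc, Rinv_l by lra.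
    simpl; nra.
Qed.

Lemma psi_1 : psi 1 = 1.
Proof. unfold psi. field. Qed.

Lemma psi_deriv t : derivable_pt_lim psi t ((2 * (1 + t^2) - 2 * t * (2 * t)) / (1 + t^2)^2).
Proof.
  assert (0 < 1 + t^2) by (simpl; nra).
  apply is_derive_Reals. unfold psi. auto_derive. lra. field. lra.
Qed.

Lemma psi_cont t : continuity_pt psi t.
Proof. apply (cont_of_deriv _ _ _ (psi_deriv t)). Qed.

Definition half_ball : posreal := mkposreal (1/2) ltac:(lra).

Lemma abel_cont (b : nat -> R) C :
  (forall k, Rabs (b k) <= C * / (INR k + 1)^2) ->
  continuity_pt (fun t => Series (fun k => b k * psi t ^ (S k))) 1.
Proof.
  intros Hb.
  apply (series_cont (fun k t => b k * psi t ^ (S k)) 1 half_ball (fun k => C * / (INR k + 1)^2)).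
  - unfold Boule. rewrite Rminus_eq_0, Rabs_R0. simpl; lra.
  - intros n y _. apply continuity_pt_mult. apply continuity_pt_const. intros a0 b0; auto.
    apply (continuity_pt_comp psi (fun z => z ^ S n)). apply psi_cont.
    apply derivable_continuous_pt, derivable_pt_pow.
  - intros n y _. rewrite Rabs_mult, <- RPow_abs.
    pose proof (psi_bound y). pose proof (Rabs_pos (psi y)).
    assert (Rabs (psi y) ^ S n <= 1) by (rewrite <- (pow1 (S n)); apply pow_incr; lra).
    pose proof (pow_le _ (S n) H0). pose proof (Rabs_pos (b n)). specialize (Hb n). nra.
  - apply ex_series_Cinvsq.
Qed.

Lemma lim_eq A V (u e : nat -> R) : Un_cv u V -> Un_cv e 0 -> (forall n, Rabs (A - u n) <= e n) -> A = V.
Proof.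
  intros Hu He Hb. destruct (Req_dec A V) as [|Hne]; auto. exfalso.
  set (d := Rabs (A - V) / 3).
  assert (Hd : 0 < d) by (unfold d; apply Rdiv_lt_0_compat; [apply Rabs_pos_lt; lra | lra]).
  destruct (Hu d Hd) as [N1 H1]. destruct (He d Hd) as [N2 H2].
  specialize (H1 (N1 + N2)%nat ltac:(lia)). specialize (H2 (N1 + N2)%nat ltac:(lia)).
  specialize (Hb (N1 + N2)%nat). unfold R_dist in H1, H2. rewrite Rminus_0_r in H2.
  apply Rabs_le_between' in Hb.
  assert (Rabs (A - V) <= Rabs (A - u (N1+N2)%nat) + Rabs (u (N1+N2)%nat - V)).
  { replace (A - V) with ((A - u (N1+N2)%nat) + (u (N1+N2)%nat - V)) by ring. apply Rabs_triang. }
  assert (Rabs (A - u (N1+N2)%nat) <= e (N1+N2)%nat).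
  { apply Rabs_le. lra. }
  assert (e (N1+N2)%nat <= Rabs (e (N1+N2)%nat)) by apply Rle_abs.
  unfold d in *. lra.
Qed.

Definition tseq (n : nat) : R := 1 - / (INR n + 2).

Lemma tseq_range n : 1/2 <= tseq n < 1.
Proof.
  unfold tseq. pose proof (pos_INR n).
  assert (0 < / (INR n + 2)) by (apply Rinv_0_lt_compat; lra).
  assert (/ (INR n + 2) <= /2) by (apply Rinv_le_contravar; lra). lra.
Qed.

Lemma tseq_cv : Un_cv tseq 1.
Proof.
  intros eps He. destruct (INR_unbounded (/ eps)) as [N HN].
  exists N. intros n Hn. unfold R_dist, tseq. pose proof (pos_INR n).
  replace (1 - / (INR n + 2) - 1) with (- / (INR n + 2)) by ring.
  rewrite Rabs_Ropp, Rabs_pos_eq by (apply Rlt_le, Rinv_0_lt_compat; lra).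
  assert (INR N <= INR n) by (apply le_INR; lia).
  assert (0 < / eps) by (apply Rinv_0_lt_compat; lra).
  rewrite <- (Rinv_inv eps). apply Rinv_lt_contravar; nra.
Qed.

Lemma abel_limit A (Psi E : R -> R) :
  continuity_pt Psi 1 -> continuity_pt E 1 -> E 1 = 0 ->
  (forall t, 1/2 <= t < 1 -> Rabs (A - Psi t) <= E t) -> A = Psi 1.
Proof.
  intros HP HE HE1 Hb.
  apply (lim_eq A (Psi 1) (fun n => Psi (tseq n)) (fun n => E (tseq n))).
  - apply is_lim_seq_Reals. apply (is_lim_seq_continuous Psi tseq 1 HP). apply is_lim_seq_Reals, tseq_cv.
  - rewrite <- HE1. apply is_lim_seq_Reals. apply (is_lim_seq_continuous E tseq 1 HE). apply is_lim_seq_Reals, tseq_cv.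
  - intros n. apply Hb, tseq_range.
Qed.

Lemma periodic6 (P : nat -> Prop) : (forall k, (k < 6)%nat -> P k) -> (forall k, P k -> P (k + 6)%nat) -> forall k, P k.
Proof.
  intros Hb Hs k. induction k as [k IH] using lt_wf_ind.
  destruct (lt_dec k 6) as [H|H]. apply Hb; auto.
  replace k with ((k - 6) + 6)%nat by lia. apply Hs. apply IH. lia.
Qed.

Lemma chi3_per n : chi3 (n + 6) = chi3 n.
Proof. unfold chi3. replace (n + 6)%nat with (n + 2 * 3)%nat by lia. rewrite Nat.Div0.mod_add. auto. Qed.

Definition ind2 (m : nat) : R := if Nat.eqb (m mod 2) 0 then 1 else 0.
Definition ind3 (m : nat) : R := if Nat.eqb (m mod 3) 0 then 1 else 0.

Lemma ind2_per n : ind2 (n + 6) = ind2 n.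
Proof. unfold ind2. replace (n + 6)%nat with (n + 3 * 2)%nat by lia. rewrite Nat.Div0.mod_add. auto. Qed.
Lemma ind3_per n : ind3 (n + 6) = ind3 n.
Proof. unfold ind3. replace (n + 6)%nat with (n + 2 * 3)%nat by lia. rewrite Nat.Div0.mod_add. auto. Qed.

Definition th6 : R := 2 * PI * (1/6).

Lemma th_shift k : INR (S (k + 6)) * th6 = INR (S k) * th6 + 2 * PI.
Proof. unfold th6. rewrite !S_INR, plus_INR. simpl. field. Qed.

Lemma sign_shift k : (-1)^(k+6) = (-1)^k.
Proof. rewrite pow_add. simpl. ring. Qed.

Lemma sin_add2PI x : sin (x + 2 * PI) = sin x.
Proof. rewrite sin_plus, sin_2PI, cos_2PI. ring. Qed.
Lemma cos_add2PI x : cos (x + 2 * PI) = cos x.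
Proof. rewrite cos_plus, sin_2PI, cos_2PI. ring. Qed.

Lemma sin_pattern k : (-1)^k * sin (INR (S k) * th6) = sqrt 3 / 2 * chi3 (S k).
Proof.
  revert k. apply periodic6.
  - intros k Hk. unfold th6.
    destruct k as [|[|[|[|[|[|k]]]]]]; try lia; unfold chi3; simpl Nat.modulo; cbv iota.
    + replace (INR 1 * (2 * PI * (1/6))) with (PI/3) by (simpl; field). rewrite sin_PI3. simpl; ring.
    + replace (INR 2 * (2 * PI * (1/6))) with (2*(PI/3)) by (simpl; field). rewrite sin_2PI3. simpl; ring.
    + replace (INR 3 * (2 * PI * (1/6))) with PI by (simpl; field). rewrite sin_PI. simpl; ring.
    + replace (INR 4 * (2 * PI * (1/6))) with (PI/3 + PI) by (simpl; field). rewrite neg_sin, sin_PI3. simpl; ring.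
    + replace (INR 5 * (2 * PI * (1/6))) with (2*(PI/3) + PI) by (simpl; field). rewrite neg_sin, sin_2PI3. simpl; ring.
    + replace (INR 6 * (2 * PI * (1/6))) with (2*PI) by (simpl; field). rewrite sin_2PI. simpl; ring.
  - intros k H. rewrite sign_shift, th_shift, sin_add2PI.
    replace (S (k + 6)) with (S k + 6)%nat by lia. rewrite chi3_per. auto.
Qed.

Lemma cos_pattern k : (-1)^k * (cos (INR (S k) * th6) - 1) = - 1/2 + 2 * ind2 (S k) - 3/2 * ind3 (S k).
Proof.
  revert k. apply periodic6.
  - intros k Hk. unfold th6.
    destruct k as [|[|[|[|[|[|k]]]]]]; try lia; unfold ind2, ind3; simpl Nat.modulo; simpl Nat.eqb; cbv iota.
    + replace (INR 1 * (2 * PI * (1/6))) with (PI/3) by (simpl; field). rewrite cos_PI3. simpl; field.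
    + replace (INR 2 * (2 * PI * (1/6))) with (2*(PI/3)) by (simpl; field). rewrite cos_2PI3. simpl; field.
    + replace (INR 3 * (2 * PI * (1/6))) with PI by (simpl; field). rewrite cos_PI. simpl; field.
    + replace (INR 4 * (2 * PI * (1/6))) with (PI/3 + PI) by (simpl; field). rewrite neg_cos, cos_PI3. simpl; field.
    + replace (INR 5 * (2 * PI * (1/6))) with (2*(PI/3) + PI) by (simpl; field). rewrite neg_cos, cos_2PI3. simpl; field.
    + replace (INR 6 * (2 * PI * (1/6))) with (2*PI) by (simpl; field). rewrite cos_2PI. simpl; field.
  - intros k H. rewrite sign_shift, th_shift, cos_add2PI.
    replace (S (k + 6)) with (S k + 6)%nat by lia. rewrite ind2_per, ind3_per. auto.
Qed.

Lemma chi6_per n : chi6 (n + 6) = chi6 n.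
Proof. unfold chi6. replace (n + 6)%nat with (n + 1 * 6)%nat by lia. rewrite Nat.Div0.mod_add. auto. Qed.

Lemma chi3_bound n : Rabs (chi3 n) <= 1.
Proof. unfold chi3. destruct (n mod 3)%nat as [|[|[|]]]; rewrite ?Rabs_R0, ?Rabs_R1, ?Rabs_m1; lra. Qed.
Lemma chi6_bound n : Rabs (chi6 n) <= 1.
Proof. unfold chi6. destruct (n mod 6)%nat as [|[|[|[|[|[|]]]]]]; rewrite ?Rabs_R0, ?Rabs_R1, ?Rabs_m1; lra. Qed.

Lemma chi3_even n : chi3 (S (2*n+1)) = - chi3 (S n).
Proof.
  revert n. apply periodic6.
  - intros k Hk. destruct k as [|[|[|[|[|[|k]]]]]]; try lia; unfold chi3; simpl; lra.
  - intros k H. replace (S (2 * (k + 6) + 1)) with (S (2*k+1) + 6 + 6)%nat by lia.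
    replace (S (k + 6)) with (S k + 6)%nat by lia. rewrite !chi3_per. auto.
Qed.

Lemma chi6_odd n : chi6 (S (2*n)) = chi3 (S (2*n)).
Proof.
  revert n. apply periodic6.
  - intros k Hk. destruct k as [|[|[|[|[|[|k]]]]]]; try lia; unfold chi3, chi6; simpl; lra.
  - intros k H. replace (S (2 * (k + 6))) with (S (2*k) + 6 + 6)%nat by lia.
    rewrite !chi3_per, !chi6_per. auto.
Qed.

Lemma chi6_even n : chi6 (S (2*n+1)) = 0.
Proof.
  revert n. apply periodic6.
  - intros k Hk. destruct k as [|[|[|[|[|[|k]]]]]]; try lia; unfold chi6; simpl; lra.
  - intros k H. replace (S (2 * (k + 6) + 1)) with (S (2*k+1) + 6 + 6)%nat by lia.
    rewrite !chi6_per. auto.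
Qed.

Lemma inv_pow_bound n p : (2 <= p)%nat -> / INR (S n) ^ p <= / (INR n + 1)^2.
Proof.
  intros Hp. rewrite S_INR. pose proof (pos_INR n).
  apply Rinv_le_contravar. apply pow_lt; lra.
  replace p with (2 + (p - 2))%nat by lia. rewrite pow_add.
  assert (1 <= (INR n + 1)^(p-2)) by (apply pow_R1_Rle; lra).
  assert (0 <= (INR n + 1)^2) by (apply pow_le; lra).
  rewrite <- (Rmult_1_r ((INR n+1)^2)) at 1. apply Rmult_le_compat_l; auto.
Qed.

Lemma ex_bounded_p (c : nat -> R) p : (2 <= p)%nat -> (forall n, Rabs (c n) <= 1) ->
  ex_series (fun n => c n / INR (S n) ^ p).
Proof.
  intros Hp Hc. apply (exs_invsq _ 1). intros n.
  unfold Rdiv. rewrite Rabs_mult, Rmult_1_l.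
  rewrite (Rabs_pos_eq (/ _)) by (apply Rlt_le, Rinv_0_lt_compat, pow_lt, lt_0_INR; lia).
  pose proof (inv_pow_bound n p Hp). specialize (Hc n).
  assert (0 <= / INR (S n) ^ p) by (apply Rlt_le, Rinv_0_lt_compat, pow_lt, lt_0_INR; lia).
  pose proof (Rabs_pos (c n)). nra.
Qed.

Lemma INR_2n1 n : INR (S (2*n+1)) = 2 * INR (S n).
Proof. rewrite !S_INR, plus_INR, mult_INR. simpl. ring. Qed.

Lemma L6_L3 : Lfun chi6 2 = 5/4 * Lfun chi3 2.
Proof.
  unfold Lfun.
  set (t := fun n => chi3 (S n) / INR (S n) ^ 2).
  set (s := fun n => chi6 (S n) / INR (S n) ^ 2).
  assert (Ht : ex_series t) by (apply ex_bounded_p; auto; intros; apply chi3_bound).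
  assert (Hs : ex_series s) by (apply ex_bounded_p; auto; intros; apply chi6_bound).
  destruct (Series_pair t Ht) as [Htp Et]. destruct (Series_pair s Hs) as [Hsp Es].
  fold t s. rewrite <- Et, <- Es.
  assert (E1 : forall n, s (2*n)%nat + s (2*n+1)%nat = t (2*n)%nat).
  { intros n. unfold s, t. rewrite chi6_odd, chi6_even. unfold Rdiv. ring. }
  assert (E2 : forall n, t (2*n+1)%nat = - / 4 * t n).
  { intros n. unfold t. rewrite chi3_even, INR_2n1. field. apply not_0_INR. lia. }
  rewrite (Series_ext _ _ E1).
  assert (Ho : ex_series (fun n => t (2*n+1)%nat)).
  { apply (ex_series_ext (fun n => - / 4 * t n)). intros; rewrite E2; auto.
    apply (ex_series_ext (fun n => t n * (- / 4))). intros; apply Rmult_comm.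
    apply ex_series_scal_r; auto. }
  assert (He : ex_series (fun n => t (2*n)%nat)).
  { apply (ex_series_ext (fun n => (t (2*n)%nat + t (2*n+1)%nat) - t (2*n+1)%nat)). intros n; simpl; ring.
    apply (ex_series_minus (fun n => t (2*n)%nat + t (2*n+1)%nat)); auto. }
  assert (HB : Series t = Series (fun n => t (2*n)%nat) + - / 4 * Series t).
  { rewrite <- Et at 1. rewrite Series_plus by auto.
    rewrite (Series_ext (fun n => t (2*n+1)%nat) _ E2), Series_scal_l. auto. }
  rewrite Et. lra.
Qed.

Lemma ind2_bound n : Rabs (ind2 n) <= 1.
Proof. unfold ind2. destruct (Nat.eqb _ _); rewrite ?Rabs_R0, ?Rabs_R1; lra. Qed.
Lemma ind3_bound n : Rabs (ind3 n) <= 1.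
Proof. unfold ind3. destruct (Nat.eqb _ _); rewrite ?Rabs_R0, ?Rabs_R1; lra. Qed.

Lemma ind2_odd n : ind2 (S (2*n)) = 0.
Proof. unfold ind2. replace (S (2*n)) with (1 + n*2)%nat by lia. rewrite Nat.Div0.mod_add. auto. Qed.
Lemma ind2_even n : ind2 (S (2*n+1)) = 1.
Proof. unfold ind2. replace (S (2*n+1)) with (0 + (S n)*2)%nat by lia. rewrite Nat.Div0.mod_add. auto. Qed.
Lemma ind3_0 n : ind3 (S (3*n)) = 0.
Proof. unfold ind3. replace (S (3*n)) with (1 + n*3)%nat by lia. rewrite Nat.Div0.mod_add. auto. Qed.
Lemma ind3_1 n : ind3 (S (3*n+1)) = 0.
Proof. unfold ind3. replace (S (3*n+1)) with (2 + n*3)%nat by lia. rewrite Nat.Div0.mod_add. auto. Qed.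
Lemma ind3_2 n : ind3 (S (3*n+2)) = 1.
Proof. unfold ind3. replace (S (3*n+2)) with (0 + (S n)*3)%nat by lia. rewrite Nat.Div0.mod_add. auto. Qed.

Lemma zeta_eq : zeta3 = Series (fun n => 1 / INR (S n) ^ 3).
Proof. reflexivity. Qed.

Lemma ex_zeta : ex_series (fun n => 1 / INR (S n) ^ 3).
Proof. apply ex_bounded_p; auto. intros; rewrite Rabs_R1; lra. Qed.

Lemma W_sum : Series (fun n => ind2 (S n) / INR (S n) ^ 3) = / 8 * zeta3.
Proof.
  set (w := fun n => ind2 (S n) / INR (S n) ^ 3).
  assert (Hw : ex_series w) by (apply ex_bounded_p; auto; intros; apply ind2_bound).
  destruct (Series_pair w Hw) as [_ E]. rewrite <- E.
  rewrite zeta_eq, <- Series_scal_l. apply Series_ext. intros n. unfold w.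
  rewrite ind2_odd, ind2_even, INR_2n1. field. repeat split; apply not_0_INR; lia.
Qed.

Lemma INR_3n2 n : INR (S (3*n+2)) = 3 * INR (S n).
Proof. rewrite !S_INR, plus_INR, mult_INR. simpl. ring. Qed.

Lemma V_sum : Series (fun n => ind3 (S n) / INR (S n) ^ 3) = / 27 * zeta3.
Proof.
  set (w := fun n => ind3 (S n) / INR (S n) ^ 3).
  assert (Hw : ex_series w) by (apply ex_bounded_p; auto; intros; apply ind3_bound).
  destruct (Series_triple w Hw) as [_ E]. rewrite <- E.
  rewrite zeta_eq, <- Series_scal_l. apply Series_ext. intros n. unfold w.
  rewrite ind3_0, ind3_1, ind3_2, INR_3n2. field. repeat split; apply not_0_INR; lia.
Qed.

Lemma ex_scal c (f : nat -> R) : ex_series f -> ex_series (fun k => c * f k).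
Proof.
  intros H. apply (ex_series_ext (fun k => f k * c)). intros; apply Rmult_comm.
  apply ex_series_scal_r; auto.
Qed.

Lemma zeta_comb : Series (fun k => (-1)^k * (cos (INR (S k) * th6) - 1) / INR (S k)^3) = - 11/36 * zeta3.
Proof.
  rewrite (Series_ext _ (fun k => (- 1/2 * (1 / INR (S k)^3) + 2 * (ind2 (S k) / INR (S k)^3)) - 3/2 * (ind3 (S k) / INR (S k)^3))).
  2:{ intros k. replace ((-1)^k * (cos (INR (S k) * th6) - 1) / INR (S k)^3) with (((-1)^k * (cos (INR (S k) * th6) - 1)) / INR (S k)^3) by reflexivity. rewrite cos_pattern. field. apply not_0_INR; lia. }
  assert (H2 : ex_series (fun n => ind2 (S n) / INR (S n) ^ 3)) by (apply ex_bounded_p; auto; intros; apply ind2_bound).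
  assert (H3 : ex_series (fun n => ind3 (S n) / INR (S n) ^ 3)) by (apply ex_bounded_p; auto; intros; apply ind3_bound).
  pose proof ex_zeta as H1.
  assert (A1 : ex_series (fun k => - 1/2 * (1 / INR (S k)^3))) by (apply (ex_scal _ _ H1)).
  assert (A2 : ex_series (fun k => 2 * (ind2 (S k) / INR (S k)^3))) by (apply (ex_scal _ _ H2)).
  assert (A3 : ex_series (fun k => 3/2 * (ind3 (S k) / INR (S k)^3))) by (apply (ex_scal _ _ H3)).
  assert (A12 : ex_series (fun k => - 1/2 * (1 / INR (S k)^3) + 2 * (ind2 (S k) / INR (S k)^3))).
  { apply (ex_series_plus (fun k => - 1/2 * (1 / INR (S k)^3)) (fun k => 2 * (ind2 (S k) / INR (S k)^3))); auto. }
  rewrite (Series_minus _ _ A12 A3), (Series_plus _ _ A1 A2), !Series_scal_l, W_sum, V_sum, <- zeta_eq.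
  field.
Qed.

Definition bG (k : nat) : R := (-1)^k * sin (INR (S k) * (2*PI*(1/6))) / INR (S k)^2.
Definition bZ (k : nat) : R := (-1)^k * (cos (INR (S k) * th6) - 1) / INR (S k)^3.
Definition bJ (k : nat) : R := / (12 * PI) * bG k + / (4 * PI^2) * bZ k.

Lemma bG_eq k : bG k = sqrt 3 / 2 * (chi3 (S k) / INR (S k)^2).
Proof.
  unfold bG. replace ((-1)^k * sin (INR (S k) * (2*PI*(1/6))) / INR (S k)^2)
    with (((-1)^k * sin (INR (S k) * th6)) / INR (S k)^2) by reflexivity.
  rewrite sin_pattern. unfold Rdiv. ring.
Qed.

Lemma Series_bG : Series bG = sqrt 3 / 2 * Lfun chi3 2.
Proof. unfold Lfun. rewrite <- Series_scal_l. apply Series_ext. intros; apply bG_eq. Qed.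

Lemma bG_bound k : Rabs (bG k) <= 1 * / (INR k + 1)^2.
Proof.
  unfold bG. replace (2*PI*(1/6)) with (2*PI*/6) by field. unfold Rdiv. rewrite Rabs_mult, Rmult_1_l.
  rewrite (Rabs_pos_eq (/ _)) by (apply Rlt_le, Rinv_0_lt_compat, pow_lt, lt_0_INR; lia).
  pose proof (inv_pow_bound k 2 ltac:(lia)).
  assert (Rabs ((-1) ^ k * sin (INR (S k) * (2 * PI * / 6))) <= 1).
  { rewrite Rabs_mult, pow_1_abs, Rmult_1_l. apply Rabs_le. apply SIN_bound. }
  assert (0 <= / INR (S k) ^ 2) by (apply Rlt_le, Rinv_0_lt_compat, pow_lt, lt_0_INR; lia).
  apply Rle_trans with (1 * / INR (S k) ^ 2); [apply Rmult_le_compat_r; auto | lra].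
Qed.

Lemma bZ_bound k : Rabs (bZ k) <= 2 * / (INR k + 1)^2.
Proof.
  unfold bZ. unfold Rdiv. rewrite Rabs_mult.
  rewrite (Rabs_pos_eq (/ _)) by (apply Rlt_le, Rinv_0_lt_compat, pow_lt, lt_0_INR; lia).
  pose proof (inv_pow_bound k 3 ltac:(lia)).
  assert (Rabs ((-1) ^ k * (cos (INR (S k) * th6) - 1)) <= 2).
  { rewrite Rabs_mult, pow_1_abs, Rmult_1_l. pose proof (COS_bound (INR (S k) * th6)). apply Rabs_le. lra. }
  assert (0 <= / INR (S k) ^ 3) by (apply Rlt_le, Rinv_0_lt_compat, pow_lt, lt_0_INR; lia).
  pose proof (Rabs_pos ((-1) ^ k * (cos (INR (S k) * th6) - 1))). nra.
Qed.

Lemma bJ_bound k : Rabs (bJ k) <= 1 * / (INR k + 1)^2.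
Proof.
  unfold bJ. pose proof PI2_3_2. pose proof (bG_bound k). pose proof (bZ_bound k).
  eapply Rle_trans. apply Rabs_triang. rewrite !Rabs_mult.
  rewrite (Rabs_pos_eq (/ (12*PI))) by (apply Rlt_le, Rinv_0_lt_compat; lra).
  rewrite (Rabs_pos_eq (/ (4*PI^2))) by (apply Rlt_le, Rinv_0_lt_compat; simpl; nra).
  assert (/ (12 * PI) <= 1/2) by (replace (1/2) with (/2) by field; apply Rinv_le_contravar; lra).
  assert (/ (4 * PI^2) <= 1/4) by (replace (1/4) with (/4) by field; apply Rinv_le_contravar; simpl; nra).
  assert (0 <= / (12 * PI)) by (apply Rlt_le, Rinv_0_lt_compat; lra).
  assert (0 <= / (4 * PI^2)) by (apply Rlt_le, Rinv_0_lt_compat; simpl; nra).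
  assert (0 <= / (INR k + 1)^2) by (apply Rlt_le, Rinv_0_lt_compat, pow_lt; pose proof (pos_INR k); lra).
  pose proof (Rabs_pos (bG k)). pose proof (Rabs_pos (bZ k)).
  assert (/ (12 * PI) * Rabs (bG k) <= 1/2 * / (INR k + 1)^2) by nra.
  assert (/ (4 * PI^2) * Rabs (bZ k) <= 1/2 * / (INR k + 1)^2) by nra.
  lra.
Qed.

Lemma Series_bJ : Series bJ = / (12 * PI) * (sqrt 3 / 2 * Lfun chi3 2) + / (4 * PI^2) * (- 11/36 * zeta3).
Proof.
  unfold bJ. rewrite <- Series_bG, <- zeta_comb.
  rewrite Series_plus, !Series_scal_l. reflexivity.
  apply ex_scal. apply (exs_invsq _ 1). apply bG_bound.
  apply ex_scal. apply (exs_invsq _ 2). apply bZ_bound.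
Qed.

Definition h2 (r : R) : R := 1/6 * (ln (1 + r + r^2) / 2).
Definition h3 (r : R) : R := (1/6)^2 * (ln (1 + r + r^2) / 2).
Definition Psi2 (t : R) : R := h2 (psi t) - / (2*PI) * Series (fun k => bG k * psi t ^ (S k)).
Definition Psi3 (t : R) : R := h3 (psi t) - 2 * Series (fun k => bJ k * psi t ^ (S k)).
Definition Er (c : R) (t : R) : R := c * (1 - psi t)^2.

Lemma Lr_16 r : Lr r (1/6) = ln (1 + r + r^2) / 2.
Proof.
  unfold Lr. replace (2*PI*(1/6)) with (PI/3) by field. rewrite cos_PI3. f_equal. f_equal. field.
Qed.

Lemma F2r_Psi2 t : F2r (psi t) (1/6) = Psi2 t.
Proof. unfold F2r, Psi2, h2. rewrite Lr_16. reflexivity. Qed.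

Lemma F3r_Psi3 t : F3r (psi t) (1/6) = Psi3 t.
Proof.
  unfold F3r, Psi3, h3. rewrite Lr_16. f_equal. f_equal. unfold Jr. apply Series_ext. intros k.
  unfold jterm, bJ, bG, bZ, th6. field. split.
  apply not_0_INR; lia. pose proof PI_RGT_0; lra.
Qed.

Lemma h_cont (c : R) : continuity_pt (fun t => c * (ln (1 + psi t + psi t^2) / 2)) 1.
Proof.
  apply (continuity_pt_comp psi (fun r => c * (ln (1 + r + r^2) / 2))). apply psi_cont.
  rewrite psi_1. apply cont_ex. auto_derive. lra.
Qed.

Lemma Er_cont c : continuity_pt (Er c) 1.
Proof.
  apply (continuity_pt_comp psi (fun r => c * (1 - r)^2)). apply psi_cont.
  apply cont_ex. auto_derive. auto.
Qed.

Lemma Psi_cont (h : R -> R) (b : nat -> R) C a :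
  continuity_pt (fun t => h (psi t)) 1 ->
  (forall k, Rabs (b k) <= C * / (INR k + 1)^2) ->
  continuity_pt (fun t => h (psi t) - a * Series (fun k => b k * psi t ^ (S k))) 1.
Proof.
  intros Hh Hb.
  apply (continuity_pt_minus (fun t => h (psi t)) (fun t => a * Series (fun k => b k * psi t ^ (S k)))); auto.
  apply (continuity_pt_scal (fun t => Series (fun k => b k * psi t ^ (S k)))).
  apply (abel_cont b C Hb).
Qed.

Lemma f2_value : f2 (1/6) = 1/6 * (ln 3 / 2) - / (2*PI) * (sqrt 3 / 2 * Lfun chi3 2).
Proof.
  rewrite <- Series_bG.
  assert (H : f2 (1/6) = Psi2 1).
  { apply (abel_limit _ Psi2 (Er (PI/18))).
    - apply (Psi_cont h2 bG 1). apply (h_cont (1/6)). apply bG_bound.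
    - apply Er_cont.
    - unfold Er. rewrite psi_1. ring.
    - intros t Ht. rewrite <- F2r_Psi2. apply f2_F2r. apply psi_range. lra. }
  rewrite H. unfold Psi2, h2. rewrite psi_1.
  replace (1 + 1 + 1^2) with 3 by ring. f_equal. f_equal. apply Series_ext. intros; rewrite pow1; ring.
Qed.

Lemma f3_value : f3 (1/6) = (1/6)^2 * (ln 3 / 2) - 2 * (/ (12 * PI) * (sqrt 3 / 2 * Lfun chi3 2) + / (4 * PI^2) * (- 11/36 * zeta3)).
Proof.
  rewrite <- Series_bJ.
  assert (H : f3 (1/6) = Psi3 1).
  { apply (abel_limit _ Psi3 (Er (PI/108))).
    - apply (Psi_cont h3 bJ 1). apply (h_cont ((1/6)^2)). apply bJ_bound.
    - apply Er_cont.
    - unfold Er. rewrite psi_1. ring.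
    - intros t Ht. rewrite <- F3r_Psi3. apply f3_F3r. apply psi_range. lra. }
  rewrite H. unfold Psi3, h3. rewrite psi_1.
  replace (1 + 1 + 1^2) with 3 by ring. f_equal. f_equal. apply Series_ext. intros; rewrite pow1; ring.
Qed.

Theorem corollary2p15 :
  mcos 2 (1/6) =
    Rpower 3 (1/12) *
    exp (sqrt 3 / (4 * PI) * (1/4 * Lfun chi3 2 - Lfun chi6 2)) /\
  mcos 3 (1/6) =
    Rpower 3 (1/72) *
    exp (11 / (72 * PI ^ 2) * zeta3 +
         sqrt 3 / (12 * PI) * (1/4 * Lfun chi3 2 - Lfun chi6 2)) /\
  zeta3 =
    72 * PI ^ 2 / 11 *
    ln (Rpower 3 (1/72) * mcos 3 (1/6) / Rpower (mcos 2 (1/6)) (1/3)).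
Proof.
  pose proof PI_RGT_0.
  rewrite (mcos2_eq (1/6)) by lra. rewrite (mcos3_eq (1/6)) by lra.
  rewrite f2_value, f3_value, L6_L3.
  unfold Rpower. rewrite ln_exp.
  split; [|split].
  - rewrite <- exp_plus. f_equal. field. lra.
  - rewrite <- exp_plus. f_equal. field. lra.
  - unfold Rdiv at 2. rewrite <- exp_Ropp, <- !exp_plus, ln_exp. field. lra.
Qed.
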